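(* For $\Re(s)\ge0$ and $(u,v)\in\mathbb{D}\times\mathbb{D}$, the function $F=F(s;\cdot,\cdot)$ satisfies the linear partial differential equation $$uP(u)\frac{\partial F}{\partial u}(u,v)+v\left[\rho(1-q)-(s+1+\rho-v)(u-q)\right]\frac{\partial F}{\partial v}(u,v)+\left[u(u-s-1-\rho)+(u-q)(u+v)\right]F(u,v)+L(u,v)=0,$$ where $P(u)=u^2-(s+1+\rho+q)u+sq+\rho+q$ and $$L(u,v)=\frac{v}{1-u}+(u+v)E(q,v)-v(s+1+\rho-v)\frac{\partial E}{\partial v}(q,v).$$
   Context: Queueing model: an $M^{[X]}/M/1$ processor-sharing queue. Batches arrive according to a Poisson process with rate $\rho>0$; each job requires an exponential service with mean $1$; the unit server capacity is shared equally among all jobs present; interarrival times, batch sizes and service requirements are independent. Batch sizes are geometric: $\mathbb{P}(B=b)=(1-q)q^{b-1}$, $b\ge1$, with $q\in(0,1)$, $\rho+q<1$. For $n\ge0,b\ge1$, $\Omega_{n,b}$ is the sojourn time of a tagged batch (from arrival to departure of its last job) given $n$ jobs present at its arrival and batch size $b$; $e^*_{n,b}(s)=\mathbb{E}(e^{-s\Omega_{n,b}})$. $\mathbb{D}$ is the open unit disk. $E(u,v)=E(s;u,v)=\sum_{n\ge0}\sum_{b\ge1}e^*_{n,b}(s)u^nv^b$ on $\mathbb{D}^2$, and $F(u,v)=\frac{E(u,v)-E(q,v)}{u-q}$ for $u\ne q$, $F(q,v)=\frac{\partial E}{\partial u}(q,v)$ (the dependence on $s$ is suppressed). *)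

(* Defs.v *)
From Stdlib Require Import Reals ClassicalEpsilon.
From Coquelicot Require Import Coquelicot.

Open Scope R_scope.

(* Embedded jump chain of the tagged-batch process.  State (n,k):
   n = number of other jobs, k = remaining jobs of the tagged batch.
   While k >= 1 the total event rate is rho + 1 (Poisson arrivals at rate
   rho, unit-capacity exponential(1) processor sharing), so each sojourn
   in a state is Exp(rho+1).  An arrival (prob rho/(1+rho)) brings a batch
   of size b+1 w.p. (1-q) q^b; a departure (prob 1/(1+rho)) is a tagged job
   w.p. k/(n+k) and another job w.p. n/(n+k).
   absorb_prob rho q m n k = P(the tagged batch leaves after exactly m events
   | initial state (n,k)). *)
Fixpoint absorb_prob (rho q : R) (m n k : nat) : R :=
  match m with
  | O => match k with O => 1 | S _ => 0 end
  | S m' =>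
    match k with
    | O => 0
    | S k' =>
      rho / (1 + rho) *
        Series (fun b => (1 - q) * q ^ b * absorb_prob rho q m' (n + S b) k)
      + / (1 + rho) *
        (INR k / INR (n + k) * absorb_prob rho q m' n k'
         + INR n / INR (n + k) * absorb_prob rho q m' (pred n) k)
    end
  end.

Definition CSeries (a : nat -> C) : C :=
  (Series (fun i => fst (a i)), Series (fun i => snd (a i))).

(* Laplace–Stieltjes transform of Omega_{n,b}: the sojourn time is a sum of
   N i.i.d. Exp(rho+1) holding times, N the number of events to absorption,
   so E e^{-s Omega} = sum_m P(N = m) ((1+rho)/(1+rho+s))^m. *)
Definition estar (rho q : R) (s : C) (n b : nat) : C :=
  CSeries (fun m => RtoC (absorb_prob rho q m n b) *
                    Cpow (RtoC (1 + rho) / (RtoC (1 + rho) + s)) m)%C.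

Definition Egen (rho q : R) (s u v : C) : C :=
  CSeries (fun n => Cpow u n *
     CSeries (fun b => estar rho q s n (S b) * Cpow v (S b)))%C.

(* complex derivative (0 if it does not exist) *)
Definition Cderive (f : C -> C) (z : C) : C :=
  match excluded_middle_informative
          (exists l : C, @is_derive C_AbsRing C_NormedModule f z l) with
  | left H => proj1_sig (constructive_indefinite_description _ H)
  | right _ => RtoC 0
  end.

Definition Fgen (rho q : R) (s u v : C) : C :=
  if excluded_middle_informative (u = RtoC q)
  then Cderive (fun w => Egen rho q s w v) (RtoC q)
  else ((Egen rho q s u v - Egen rho q s (RtoC q) v) / (u - RtoC q))%C.

Definition Ppoly (rho q : R) (s u : C) : C :=
  (u * u - (s + RtoC 1 + RtoC rho + RtoC q) * u + s * RtoC q + RtoC rho + RtoC q)%C.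

(* Submission.v *)
Require Import Defs.
From Stdlib Require Import Reals Lra Lia ClassicalEpsilon.
From Coquelicot Require Import Coquelicot.
Open Scope R_scope.

Definition Cis (a : nat -> C) (l : C) := @is_series C_AbsRing C_NormedModule a l.

Lemma Cis_eps a l : Cis a l <-> forall eps, 0 < eps -> exists N, forall n, (N <= n)%nat -> Cmod (sum_n a n - l) < eps.
Proof.
  pose proof (@filterlim_locally_ball_norm C_AbsRing nat C_NormedModule eventually _ (sum_n a) l) as E.
  unfold Cis, is_series. split.
  - intros H eps Heps. destruct (proj1 E H (mkposreal eps Heps)) as [N HN]. exists N. intros n Hn. apply (HN n Hn).
  - intros H. refine (proj2 E _). intros eps. destruct (H eps (cond_pos eps)) as [N HN]. exists N. intros n Hn. apply (HN n Hn).
Qed.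

Lemma Ris_eps (a : nat -> R) l : is_series a l <-> forall eps, 0 < eps -> exists N, forall n, (N <= n)%nat -> Rabs (sum_n a n - l) < eps.
Proof.
  pose proof (@filterlim_locally_ball_norm R_AbsRing nat R_NormedModule eventually _ (sum_n a) l) as E.
  unfold is_series. split.
  - intros H eps Heps. destruct (proj1 E H (mkposreal eps Heps)) as [N HN]. exists N. intros n Hn. apply (HN n Hn).
  - intros H. refine (proj2 E _). intros eps. destruct (H eps (cond_pos eps)) as [N HN]. exists N. intros n Hn. apply (HN n Hn).
Qed.

Lemma Cmod_small_0 (d : C) : (forall eps, 0 < eps -> Cmod d < eps) -> d = 0%C.
Proof.
  intros H. apply Cmod_eq_0. destruct (Cmod_ge_0 d) as [Hp|Hp]; [|auto].
  specialize (H _ Hp). lra.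
Qed.

Lemma Cis_unique a l1 l2 : Cis a l1 -> Cis a l2 -> l1 = l2.
Proof.
  rewrite !Cis_eps. intros H1 H2.
  assert (l2 - l1 = 0)%C.
  { apply Cmod_small_0. intros eps Heps.
    destruct (H1 (eps/2)) as [N1 HN1]; [lra|]. destruct (H2 (eps/2)) as [N2 HN2]; [lra|].
    specialize (HN1 (max N1 N2) ltac:(lia)). specialize (HN2 (max N1 N2) ltac:(lia)).
    replace (l2 - l1)%C with ((sum_n a (max N1 N2) - l1) - (sum_n a (max N1 N2) - l2))%C by ring.
    eapply Rle_lt_trans. apply Cmod_triangle. rewrite Cmod_opp. lra. }
  replace l2 with ((l2 - l1) + l1)%C by ring. rewrite H. ring.
Qed.

Lemma sum_n_fst (a : nat -> C) n : fst (sum_n a n) = sum_n (fun i => fst (a i)) n.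
Proof. induction n. rewrite !sum_O. auto. rewrite !sum_Sn. simpl. rewrite <- IHn. reflexivity. Qed.
Lemma sum_n_snd (a : nat -> C) n : snd (sum_n a n) = sum_n (fun i => snd (a i)) n.
Proof. induction n. rewrite !sum_O. auto. rewrite !sum_Sn. simpl. rewrite <- IHn. reflexivity. Qed.

Lemma im_le_Cmod (c : C) : Rabs (Im c) <= Cmod c.
Proof.
  destruct c as [x y]. unfold Cmod, Im; simpl. rewrite <- sqrt_Rsqr_abs. apply sqrt_le_1_alt.
  unfold Rsqr. nra.
Qed.

Lemma CSeries_eq a l : Cis a l -> CSeries a = l.
Proof.
  intros H. unfold CSeries. destruct l as [l1 l2].
  f_equal; apply is_series_unique; apply Ris_eps; intros eps Heps;
  destruct (proj1 (Cis_eps a _) H eps Heps) as [N HN]; exists N; intros n Hn; specialize (HN n Hn).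
  - rewrite <- sum_n_fst. eapply Rle_lt_trans; [|apply HN]. apply (re_le_Cmod (sum_n a n - (l1,l2))%C).
  - rewrite <- sum_n_snd. eapply Rle_lt_trans; [|apply HN]. apply (im_le_Cmod (sum_n a n - (l1,l2))%C).
Qed.

Lemma Cis_CSeries a : (exists l, Cis a l) -> Cis a (CSeries a).
Proof. intros [l Hl]. rewrite (CSeries_eq a l Hl). exact Hl. Qed.

Lemma Cis_ex_le (a : nat -> C) (b : nat -> R) : (forall n, Cmod (a n) <= b n) -> ex_series b -> exists l, Cis a l.
Proof. intros H Hb. apply (@ex_series_le C_AbsRing C_CompleteNormedModule a b H Hb). Qed.

Lemma sum_n_Cmod_le (a : nat -> C) (b : nat -> R) : (forall n, Cmod (a n) <= b n) -> forall n, Cmod (sum_n a n) <= sum_n b n.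
Proof.
  intros H n. induction n. rewrite !sum_O. apply H. rewrite !sum_Sn.
  eapply Rle_trans. apply Cmod_triangle. apply Rplus_le_compat. apply IHn. apply H.
Qed.

Lemma Cis_norm_le (a : nat -> C) l (b : nat -> R) B : Cis a l -> is_series b B -> (forall n, Cmod (a n) <= b n) -> Cmod l <= B.
Proof.
  intros Ha Hb H. destruct (Rle_or_lt (Cmod l) B) as [|Hlt]; auto. exfalso.
  set (eps := (Cmod l - B)/2).
  destruct (proj1 (Cis_eps a l) Ha eps ltac:(unfold eps; lra)) as [N1 HN1].
  destruct (proj1 (Ris_eps b B) Hb eps ltac:(unfold eps; lra)) as [N2 HN2].
  specialize (HN1 (max N1 N2) ltac:(lia)). specialize (HN2 (max N1 N2) ltac:(lia)).
  pose proof (sum_n_Cmod_le a b H (max N1 N2)).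
  assert (Cmod l <= Cmod (sum_n a (max N1 N2)) + Cmod (sum_n a (max N1 N2) - l)).
  { replace l with (sum_n a (max N1 N2) - (sum_n a (max N1 N2) - l))%C at 1 by ring.
    eapply Rle_trans. apply Cmod_triangle. rewrite Cmod_opp. lra. }
  apply Rabs_def2 in HN2. unfold eps in *. lra.
Qed.

Lemma Cis_ext a b l : (forall n, a n = b n) -> Cis a l -> Cis b l.
Proof. intros H. apply is_series_ext. exact H. Qed.

Lemma Cis_plus a b la lb : Cis a la -> Cis b lb -> Cis (fun n => a n + b n)%C (la + lb)%C.
Proof. intros Ha Hb. apply (is_series_plus a b la lb Ha Hb). Qed.

Lemma Cis_scal c a l : Cis a l -> Cis (fun n => c * a n)%C (c * l)%C.
Proof. intros Ha. apply (is_series_scal_l c a l Ha). Qed.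

Lemma Cis_opp a l : Cis a l -> Cis (fun n => - a n)%C (- l)%C.
Proof. intros Ha. apply (is_series_opp a l Ha). Qed.

Lemma Cis_minus a b la lb : Cis a la -> Cis b lb -> Cis (fun n => a n - b n)%C (la - lb)%C.
Proof. intros Ha Hb. apply Cis_plus; auto. apply Cis_opp; auto. Qed.

Lemma Cis_shift a l : Cis (fun k => a (S k)) l -> Cis a (l + a O)%C.
Proof. intros H. apply (@is_series_decr_1 C_AbsRing C_NormedModule).
  match goal with |- is_series _ ?X => replace X with l end. exact H.
  change (l = (l + a O) + - a O)%C. ring. Qed.

Lemma Cis_unshift a l : Cis a l -> Cis (fun k => a (S k)) (l - a O)%C.
Proof. intros H. apply (@is_series_incr_1 C_AbsRing C_NormedModule).
  match goal with |- is_series _ ?X => replace X with l end. exact H.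
  change (l = (l - a O) + a O)%C. ring. Qed.

Lemma sum_n_RtoC (r : nat -> R) n : sum_n (fun i => RtoC (r i)) n = RtoC (sum_n r n).
Proof. induction n. rewrite !sum_O; auto. rewrite !sum_Sn, IHn. simpl. change (RtoC (sum_n r n) + RtoC (r (S n)) = RtoC (sum_n r n + r (S n)))%C.
  rewrite RtoC_plus. auto. Qed.

Lemma Cis_RtoC (r : nat -> R) l : is_series r l -> Cis (fun i => RtoC (r i)) (RtoC l).
Proof. intros H. apply Cis_eps. intros eps He. destruct (proj1 (Ris_eps r l) H eps He) as [N HN].
  exists N. intros n Hn. rewrite sum_n_RtoC, <- RtoC_minus, Cmod_R. auto. Qed.

Lemma Cis_zero : Cis (fun _ => 0%C) 0%C.
Proof. assert (H : is_series (fun _ : nat => 0) 0).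
  { apply Ris_eps. intros eps He. exists O. intros n _. rewrite sum_n_const. rewrite Rmult_0_r, Rminus_0_r, Rabs_R0. auto. }
  apply (Cis_RtoC _ _ H).
Qed.


Lemma sum_n_R_Sn (b : nat -> R) n : sum_n b (S n) = sum_n b n + b (S n).
Proof. rewrite sum_Sn. reflexivity. Qed.

Lemma sum_n_R_O (b : nat -> R) : sum_n b O = b O.
Proof. rewrite sum_O. reflexivity. Qed.

Lemma sum_n_C_Sn (b : nat -> C) n : sum_n b (S n) = (sum_n b n + b (S n))%C.
Proof. rewrite sum_Sn. reflexivity. Qed.

Lemma sum_n_C_O (b : nat -> C) : sum_n b O = b O.
Proof. rewrite sum_O. reflexivity. Qed.

Lemma sum_n_nonneg_mono (b : nat -> R) : (forall n, 0 <= b n) -> forall m n, (m <= n)%nat -> sum_n b m <= sum_n b n.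
Proof. intros Hb m n Hmn. induction Hmn. lra. rewrite sum_n_R_Sn. specialize (Hb (S m0)). lra. Qed.

Lemma Ris_partial_le (b : nat -> R) B : (forall n, 0 <= b n) -> is_series b B -> forall J, sum_n b J <= B.
Proof.
  intros Hb H J. destruct (Rle_or_lt (sum_n b J) B) as [|Hlt]; auto. exfalso.
  destruct (proj1 (Ris_eps b B) H (sum_n b J - B) ltac:(lra)) as [N HN].
  specialize (HN (max N J) ltac:(lia)). pose proof (sum_n_nonneg_mono b Hb J (max N J) ltac:(lia)).
  apply Rabs_def2 in HN. lra.
Qed.

Lemma Cis_sum_n (a : nat -> nat -> C) (Sv : nat -> C) :
  (forall i, Cis (fun j => a i j) (Sv i)) -> forall N, Cis (fun j => sum_n (fun i => a i j) N) (sum_n Sv N).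
Proof.
  intros H N. induction N.
  - rewrite sum_n_C_O. eapply Cis_ext; [|apply (H O)]. intros j. rewrite sum_n_C_O. auto.
  - rewrite sum_n_C_Sn. eapply Cis_ext; [|apply Cis_plus; [apply IHN|apply (H (S N))]].
    intros j. rewrite sum_n_C_Sn. auto.
Qed.

Lemma Ris_sum_n (a : nat -> nat -> R) (Sv : nat -> R) :
  (forall i, is_series (fun j => a i j) (Sv i)) -> forall N, is_series (fun j => sum_n (fun i => a i j) N) (sum_n Sv N).
Proof.
  intros H N. induction N.
  - rewrite sum_n_R_O. eapply is_series_ext; [|apply (H O)]. intros j. rewrite sum_n_R_O. auto.
  - rewrite sum_n_R_Sn. eapply is_series_ext; [|apply (is_series_plus _ _ _ _ IHN (H (S N)))].
    intros j. rewrite sum_n_R_Sn. auto.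
Qed.

Lemma Cis_tail_bound (x : nat -> C) T (y : nat -> R) Dv N :
  Cis x T -> is_series y Dv -> (forall i, Cmod (x i) <= y i) ->
  Cmod (T - sum_n x N) <= Dv - sum_n y N.
Proof.
  intros Hx Hy Hle.
  assert (H1 : Cis (fun k => x (S N + k)%nat) (T - sum_n x N)%C).
  { apply (@is_series_incr_n C_AbsRing C_NormedModule x (S N)). lia.
    match goal with |- is_series _ ?X => replace X with T end. exact Hx.
    simpl. change (T = (T - sum_n x N) + sum_n x N)%C. ring. }
  assert (H2 : is_series (fun k => y (S N + k)%nat) (Dv - sum_n y N)).
  { apply (@is_series_incr_n R_AbsRing R_NormedModule y (S N)). lia.
    match goal with |- is_series _ ?X => replace X with Dv end. exact Hy.
    simpl. unfold plus; simpl. unfold Rminus. rewrite Rplus_assoc, Rplus_opp_l, Rplus_0_r. reflexivity. }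
  apply (Cis_norm_le _ _ _ _ H1 H2). intros; apply Hle.
Qed.

Lemma fin_tails (a : nat -> nat -> C) (D : nat -> R) :
  (forall j, is_series (fun i => Cmod (a i j)) (D j)) ->
  forall J eps, 0 < eps -> exists N0, forall N, (N0 <= N)%nat ->
    sum_n D J - sum_n (fun j => sum_n (fun i => Cmod (a i j)) N) J < eps.
Proof.
  intros HD J. induction J; intros eps He.
  - destruct (proj1 (Ris_eps _ _) (HD O) eps He) as [N0 HN]. exists N0. intros N HN0.
    specialize (HN N HN0). rewrite !sum_n_R_O. apply Rabs_def2 in HN. lra.
  - destruct (IHJ (eps/2) ltac:(lra)) as [N1 HN1].
    destruct (proj1 (Ris_eps _ _) (HD (S J)) (eps/2) ltac:(lra)) as [N2 HN2].
    exists (max N1 N2). intros N HN. specialize (HN1 N ltac:(lia)). specialize (HN2 N ltac:(lia)).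
    rewrite !sum_n_R_Sn. apply Rabs_def2 in HN2. lra.
Qed.

Lemma Cfubini (a : nat -> nat -> C) (Sv T : nat -> C) (D : nat -> R) (L : C) :
  (forall i, Cis (fun j => a i j) (Sv i)) ->
  (forall j, is_series (fun i => Cmod (a i j)) (D j)) ->
  ex_series D ->
  (forall j, Cis (fun i => a i j) (T j)) ->
  Cis T L -> Cis Sv L.
Proof.
  intros HS HD [DD HDD] HT HL.
  assert (Dnn : forall j, 0 <= D j).
  { intros j. eapply Rle_trans; [|apply (Ris_partial_le _ _ (fun i => Cmod_ge_0 _) (HD j) O)].
    rewrite sum_n_R_O. apply Cmod_ge_0. }
  assert (Hrow : forall i, exists Yi, is_series (fun j => Cmod (a i j)) Yi).
  { intros i. destruct (@ex_series_le R_AbsRing R_CompleteNormedModule (fun j => Cmod (a i j)) D) as [Yi HYi].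
    - intros j. change (Rabs (Cmod (a i j)) <= D j). rewrite Rabs_pos_eq by apply Cmod_ge_0.
      pose proof (Ris_partial_le _ _ (fun i => Cmod_ge_0 _) (HD j) i).
      pose proof (sum_n_nonneg_mono (fun i => Cmod (a i j)) (fun i => Cmod_ge_0 _) O i ltac:(lia)).
      destruct i. rewrite sum_n_R_O in *. lra.
      rewrite sum_n_R_Sn in *. pose proof (sum_n_nonneg_mono (fun i => Cmod (a i j)) (fun i => Cmod_ge_0 _) O i ltac:(lia)).
      rewrite sum_n_R_O in *. pose proof (Cmod_ge_0 (a O j)). lra.
    - exists DD; auto.
    - exists Yi; auto. }
  destruct (choice _ Hrow) as [Y HY].
  apply Cis_eps. intros eps He.
  destruct (proj1 (Ris_eps _ _) HDD (eps/2) ltac:(lra)) as [J HJ].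
  specialize (HJ J (le_n _)).
  destruct (fin_tails a D HD J (eps/2) ltac:(lra)) as [N0 HN0].
  exists N0. intros N HN. specialize (HN0 N HN).
  assert (HC : Cis (fun j => T j - sum_n (fun i => a i j) N)%C (L - sum_n Sv N)%C).
  { apply Cis_minus; auto. apply Cis_sum_n; auto. }
  assert (HR : is_series (fun j => D j - sum_n (fun i => Cmod (a i j)) N) (DD - sum_n Y N)).
  { apply (is_series_minus _ _ _ _ HDD). apply Ris_sum_n. auto. }
  pose proof (Cis_norm_le _ _ _ _ HC HR (fun j => Cis_tail_bound _ _ _ _ N (HT j) (HD j) (fun i => Rle_refl _))) as Hb.
  assert (HP : sum_n (fun j => sum_n (fun i => Cmod (a i j)) N) J <= sum_n Y N).
  { apply Ris_partial_le. intros j. apply (Rle_trans _ (sum_n (fun i => Cmod (a i j)) O)).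
    rewrite sum_n_R_O; apply Cmod_ge_0. apply sum_n_nonneg_mono; [intros; apply Cmod_ge_0|lia].
    apply Ris_sum_n. auto. }
  rewrite <- Cmod_opp. replace (- (sum_n Sv N - L))%C with (L - sum_n Sv N)%C by ring.
  apply Rabs_def2 in HJ. lra.
Qed.

Lemma ex_series_le_R (a b : nat -> R) : (forall k, 0 <= a k <= b k) -> ex_series b -> ex_series a.
Proof. intros H Hb. apply (@ex_series_le R_AbsRing R_CompleteNormedModule a b); auto.
  intros k. change (Rabs (a k) <= b k). rewrite Rabs_pos_eq; apply H. Qed.

Lemma sum_k2_pos r : 0 < r < 1 -> ex_series (fun k => INR k * INR k * r ^ k).
Proof.
  intros Hr. apply ex_series_incr_1.
  apply ex_series_Rabs.
  apply (ex_series_DAlembert _ r). lra.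
  - intros n. apply Rgt_not_eq. apply Rmult_lt_0_compat. apply Rmult_lt_0_compat; apply lt_0_INR; lia. apply pow_lt; lra.
  - assert (H0 : is_lim_seq (fun n => / INR (S n)) 0).
    { replace (Finite 0) with (Rbar_inv p_infty) by reflexivity. apply is_lim_seq_inv; [|discriminate].
      apply (is_lim_seq_incr_1 INR p_infty). apply is_lim_seq_INR. }
    assert (H1 : is_lim_seq (fun n => (1 + / INR (S n)) * (1 + / INR (S n)) * r) ((1 + 0) * (1 + 0) * r)).
    { apply is_lim_seq_mult'. apply is_lim_seq_mult'; apply is_lim_seq_plus'; auto; apply is_lim_seq_const. apply is_lim_seq_const. }
    replace ((1 + 0) * (1 + 0) * r) with r in H1 by ring.
    eapply is_lim_seq_ext; [|apply H1]. intros n. cbv beta.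
    assert (0 < INR (S n)) by (apply lt_0_INR; lia).
    assert (0 < r ^ n) by (apply pow_lt; lra).
    rewrite (S_INR (S n)). rewrite <- !tech_pow_Rmult.
    rewrite Rabs_pos_eq.
    + field. repeat split; lra.
    + apply Rmult_le_pos. apply Rmult_le_pos; [apply Rmult_le_pos|]; nra.
      apply Rlt_le. apply Rinv_0_lt_compat. apply Rmult_lt_0_compat; [apply Rmult_lt_0_compat|]; nra.
Qed.

Lemma sum_k2 r : 0 <= r < 1 -> ex_series (fun k => INR k * INR k * r ^ k).
Proof.
  intros Hr. apply (ex_series_le_R _ (fun k => INR k * INR k * ((1+r)/2) ^ k)).
  - intros k. pose proof (pos_INR k). split. apply Rmult_le_pos. nra. apply pow_le; lra.
    apply Rmult_le_compat_l. nra. apply pow_incr. lra.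
  - apply sum_k2_pos. lra.
Qed.

Lemma sum_k1 r : 0 <= r < 1 -> ex_series (fun k => INR k * r ^ (pred k)).
Proof.
  intros Hr. set (p := (1+r)/2).
  apply (ex_series_le_R _ (fun k => / p * (INR k * INR k * p ^ k))).
  - intros k. pose proof (pos_INR k). assert (0 < p) by (unfold p; lra). split.
    apply Rmult_le_pos; auto. apply pow_le; lra.
    destruct k. simpl. lra.
    simpl pred. replace (/ p * (INR (S k) * INR (S k) * p ^ S k)) with (INR (S k) * (INR (S k) * p ^ k)) by (simpl; field; lra).
    apply Rmult_le_compat_l; auto.
    rewrite <- (Rmult_1_l (r ^ k)). apply Rmult_le_compat. lra. apply pow_le; lra.
    rewrite S_INR. pose proof (pos_INR k). lra. apply pow_incr. unfold p; lra.
  - destruct (sum_k2 p ltac:(unfold p; lra)) as [l Hl]. exists (/p * l). apply (is_series_scal_l (/p) _ _ Hl).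
Qed.

Lemma RtoC_0' : RtoC 0 = 0%C. Proof. reflexivity. Qed.
Lemma RtoC_1' : RtoC 1 = 1%C. Proof. reflexivity. Qed.

Lemma Cpow_pred_S (x : C) k : (x * x ^ (pred (S k)))%C = (x ^ S k)%C.
Proof. simpl. reflexivity. Qed.

Lemma mono_bound (x y : C) r k : Cmod x <= r -> Cmod y <= r ->
  r * r * Cmod (y ^ k - x ^ k - RtoC (INR k) * x ^ (pred k) * (y - x)) <= INR k * INR k * r ^ k * (Cmod (y - x) * Cmod (y - x)).
Proof.
  intros Hx Hy. assert (Hr : 0 <= r) by (eapply Rle_trans; [apply Cmod_ge_0|apply Hx]).
  induction k.
  - assert (E : (y ^ 0 - x ^ 0 - RtoC (INR 0) * x ^ pred 0 * (y - x))%C = 0%C).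
    { simpl pow. change (INR 0) with 0. simpl. apply injective_projections; simpl; ring. }
    rewrite E, Cmod_0. simpl. nra.
  - assert (E : (y ^ S k - x ^ S k - RtoC (INR (S k)) * x ^ pred (S k) * (y - x))%C
              = (y * (y ^ k - x ^ k - RtoC (INR k) * x ^ pred k * (y - x)) + RtoC (INR k) * x ^ pred k * ((y - x) * (y - x)))%C).
    { rewrite S_INR, RtoC_plus. destruct k.
      - simpl pred. change (INR 0) with 0. simpl. ring.
      - simpl pred. rewrite !Cpow_S. ring. }
    rewrite E. clear E.
    set (D := (y ^ k - x ^ k - RtoC (INR k) * x ^ pred k * (y - x))%C) in *.
    assert (H1 : Cmod (y * D + RtoC (INR k) * x ^ pred k * ((y - x) * (y - x)))
                 <= Cmod y * Cmod D + INR k * Cmod x ^ pred k * (Cmod (y - x) * Cmod (y - x))).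
    { eapply Rle_trans. apply Cmod_triangle. rewrite !Cmod_mult, Cmod_pow, Cmod_R, Rabs_pos_eq by apply pos_INR. lra. }
    assert (H2 : r * r * (INR k * Cmod x ^ pred k) <= INR k * r ^ S k).
    { destruct k. simpl. lra. simpl pred. rewrite <- tech_pow_Rmult.
      replace (r * r * (INR (S k) * Cmod x ^ k)) with (INR (S k) * r * (r * Cmod x ^ k)) by ring.
      replace (INR (S k) * (r * r ^ S k)) with (INR (S k) * r * (r * r ^ k)) by (simpl; ring).
      apply Rmult_le_compat_l. pose proof (pos_INR (S k)). nra.
      apply Rmult_le_compat_l. auto. apply pow_incr. split; [apply Cmod_ge_0|auto]. }
    pose proof (Cmod_ge_0 D) as P1. pose proof (Cmod_ge_0 (y - x)) as P0.
    assert (H3 : r * r * (Cmod y * Cmod D) <= r * (r * r * Cmod D)).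
    { replace (r * (r * r * Cmod D)) with (r * r * (r * Cmod D)) by ring.
      apply Rmult_le_compat_l. nra. apply Rmult_le_compat_r; auto. }
    set (c2 := Cmod (y - x) * Cmod (y - x)) in *. assert (P2 : 0 <= c2) by (unfold c2; nra).
    assert (H4 : r * (r * r * Cmod D) <= r * (INR k * INR k * r ^ k * c2)) by (apply Rmult_le_compat_l; auto).
    rewrite S_INR. simpl (r ^ S k).
    pose proof (pos_INR k) as P3. assert (P4 : 0 <= r ^ k) by (apply pow_le; auto).
    assert (H5 : r * r * (INR k * Cmod x ^ pred k * c2) <= INR k * r ^ S k * c2).
    { replace (r * r * (INR k * Cmod x ^ pred k * c2)) with ((r * r * (INR k * Cmod x ^ pred k)) * c2) by ring.
      apply Rmult_le_compat_r; auto. }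
    simpl (r ^ S k) in H5.
    assert (H6 : r * r * Cmod (y * D + RtoC (INR k) * x ^ pred k * ((y - x) * (y - x)))
                 <= r * r * (Cmod y * Cmod D + INR k * Cmod x ^ pred k * c2)) by (apply Rmult_le_compat_l; [nra|auto]).
    assert (P5 : 0 <= INR k * r * r ^ k * c2) by (repeat apply Rmult_le_pos; auto).
    assert (P6 : 0 <= r * r ^ k * c2) by (repeat apply Rmult_le_pos; auto). lra.
Qed.

Lemma deriv_bound (f : C -> C) x l d K : 0 < d -> 0 <= K ->
  (forall y, Cmod (y - x) < d -> Cmod (f y - f x - (y - x) * l) <= K * (Cmod (y - x) * Cmod (y - x))) ->
  @is_derive C_AbsRing C_NormedModule f x l.
Proof.
  intros Hd HK H. unfold is_derive, filterdiff. split. apply is_linear_scal_l.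
  intros x0 Hx0. pose proof (@is_filter_lim_locally_unique C_AbsRing (AbsRing_NormedModule C_AbsRing) x x0 Hx0) as Ex. subst x0.
  intros eps.
  set (e := Rmin d (eps / (K + 1))).
  assert (He : 0 < e). { unfold e. apply Rmin_pos; auto. apply Rdiv_lt_0_compat. apply cond_pos. lra. }
  exists (mkposreal e He). intros y Hy.
  change (Cmod (f y - f x - (y - x) * l) <= eps * Cmod (y - x)).
  change (Cmod (y - x) < e) in Hy.
  assert (Hy1 : Cmod (y - x) < d) by (eapply Rlt_le_trans; [apply Hy|apply Rmin_l]).
  assert (Hy2 : Cmod (y - x) <= eps / (K + 1)) by (left; eapply Rlt_le_trans; [apply Hy|apply Rmin_r]).
  eapply Rle_trans. apply (H y Hy1). pose proof (Cmod_ge_0 (y - x)). pose proof (cond_pos eps).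
  assert (K * Cmod (y - x) <= eps).
  { apply (Rmult_le_compat_l K) in Hy2; auto. eapply Rle_trans. apply Hy2.
    assert (E1 : eps / (K + 1) * (K + 1) = eps) by (field; lra). assert (0 <= eps / (K+1)) by (apply Rdiv_le_0_compat; lra). nra. }
  nra.
Qed.

Lemma deriv_unique (f : C -> C) (x l1 l2 : C) :
  @is_derive C_AbsRing C_NormedModule f x l1 -> @is_derive C_AbsRing C_NormedModule f x l2 -> l1 = l2.
Proof.
  intros [_ H1] [_ H2].
  specialize (H1 x (fun P H => H)). specialize (H2 x (fun P H => H)).
  assert (E : (l2 - l1)%C = 0%C).
  2:{ replace l2 with ((l2 - l1) + l1)%C by ring. rewrite E. ring. }
  apply Cmod_small_0. intros eps He.
  destruct (H1 (mkposreal (eps/4) ltac:(lra))) as [d1 Hd1].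
  destruct (H2 (mkposreal (eps/4) ltac:(lra))) as [d2 Hd2].
  set (t := Rmin d1 d2 / 2).
  assert (Ht : 0 < t). { unfold t. apply Rdiv_lt_0_compat. apply Rmin_pos; apply cond_pos. lra. }
  assert (Hb : forall d : posreal, Rmin d1 d2 <= d -> Cmod (x + RtoC t - x) < d).
  { intros d Hd. assert (0 < Rmin d1 d2) by (apply Rmin_pos; apply cond_pos).
    replace (x + RtoC t - x)%C with (RtoC t) by ring. rewrite Cmod_R, Rabs_pos_eq by lra. unfold t. lra. }
  specialize (Hd1 (x + RtoC t)%C (Hb d1 (Rmin_l _ _))). specialize (Hd2 (x + RtoC t)%C (Hb d2 (Rmin_r _ _))).
  simpl in Hd1, Hd2.
  change (Cmod (f (x + RtoC t) - f x - (x + RtoC t - x) * l1) <= eps / 4 * Cmod (x + RtoC t - x))%C in Hd1.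
  change (Cmod (f (x + RtoC t) - f x - (x + RtoC t - x) * l2) <= eps / 4 * Cmod (x + RtoC t - x))%C in Hd2.
  replace (x + RtoC t - x)%C with (RtoC t) in Hd1, Hd2 by ring.
  rewrite Cmod_R, Rabs_pos_eq in Hd1, Hd2 by lra.
  assert (Cmod (RtoC t * (l2 - l1)) <= eps / 2 * t).
  { replace (RtoC t * (l2 - l1))%C with ((f (x + RtoC t) - f x - RtoC t * l1) - (f (x + RtoC t) - f x - RtoC t * l2))%C by ring.
    eapply Rle_trans. apply Cmod_triangle. rewrite Cmod_opp. lra. }
  rewrite Cmod_mult, Cmod_R, Rabs_pos_eq in H by lra.
  apply (Rmult_lt_reg_l t); auto. nra.
Qed.

Lemma SF (h : nat -> C -> C) (d : nat -> C) (Cc : nat -> R) (Sf : C -> C) (x : C) (dl : R) (Dd : C) (K : R) :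
  (forall y, Cmod (y - x) < dl -> Cis (fun k => h k y) (Sf y)) ->
  Cis d Dd -> is_series Cc K ->
  (forall y k, Cmod (y - x) < dl -> Cmod (h k y - h k x - (y - x) * d k) <= Cc k * (Cmod (y - x) * Cmod (y - x))) ->
  0 < dl ->
  forall y, Cmod (y - x) < dl -> Cmod (Sf y - Sf x - (y - x) * Dd) <= K * (Cmod (y - x) * Cmod (y - x)).
Proof.
  intros Hh Hd HC Hb Hdl y Hy.
  pose proof (is_series_scal_r (Cmod (y-x) * Cmod (y-x)) Cc K HC) as HC2.
  assert (Hs : Cis (fun k => h k y - h k x - (y - x) * d k)%C (Sf y - Sf x - (y - x) * Dd)%C).
  { assert (Hx : Cmod (x - x) < dl) by (unfold Cminus; rewrite Cplus_opp_r, Cmod_0; auto).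
    apply Cis_minus. apply Cis_minus. apply (Hh y Hy). apply (Hh x Hx). apply Cis_scal; auto. }
  apply (Cis_norm_le _ _ _ _ Hs HC2).
  intros k. apply Hb; auto.
Qed.

Lemma Ris_scal (c : R) (a : nat -> R) l : is_series a l -> is_series (fun n => c * a n) (c * l).
Proof. intros H. exact (is_series_scal_l c a l H). Qed.

Definition Pser (c : nat -> C) (y : C) := CSeries (fun m => c m * y ^ m)%C.
Definition Pder (c : nat -> C) (y : C) := CSeries (fun m => c m * RtoC (INR m) * y ^ (pred m))%C.
Definition B1 (r : R) := Series (fun m => INR m * r ^ pred m).

Lemma geom_is r : 0 <= r < 1 -> forall M, is_series (fun m => M * r ^ m) (M / (1 - r)).
Proof. intros Hr M. apply (is_series_scal_l M (fun m => r ^ m)). apply is_series_geom. rewrite Rabs_pos_eq; lra. Qed.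

Lemma PS_cv c M y : (forall m, Cmod (c m) <= M) -> Cmod y < 1 ->
  Cis (fun m => c m * y ^ m)%C (Pser c y) /\ Cmod (Pser c y) <= M / (1 - Cmod y).
Proof.
  intros Hc Hy. pose proof (Cmod_ge_0 y).
  assert (Hb : forall m, Cmod (c m * y ^ m)%C <= M * Cmod y ^ m).
  { intros m. rewrite Cmod_mult, Cmod_pow. apply Rmult_le_compat_r. apply pow_le; auto. auto. }
  assert (Hcv : Cis (fun m => c m * y ^ m)%C (Pser c y)).
  { apply Cis_CSeries. apply (Cis_ex_le _ _ Hb). eexists. apply geom_is. lra. }
  split; auto. eapply Cis_norm_le. apply Hcv. apply geom_is. lra. auto.
Qed.

Lemma B1_is r : 0 <= r < 1 -> is_series (fun m => INR m * r ^ pred m) (B1 r).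
Proof. intros Hr. apply Series_correct. apply sum_k1. auto. Qed.

Lemma PD_cv c M y : (forall m, Cmod (c m) <= M) -> Cmod y < 1 ->
  Cis (fun m => c m * RtoC (INR m) * y ^ (pred m))%C (Pder c y) /\ Cmod (Pder c y) <= M * B1 (Cmod y).
Proof.
  intros Hc Hy. pose proof (Cmod_ge_0 y).
  assert (Hb : forall m, Cmod (c m * RtoC (INR m) * y ^ (pred m))%C <= M * (INR m * Cmod y ^ pred m)).
  { intros m. rewrite !Cmod_mult, Cmod_pow, Cmod_R, Rabs_pos_eq by apply pos_INR. rewrite Rmult_assoc.
    apply Rmult_le_compat_r. apply Rmult_le_pos. apply pos_INR. apply pow_le; auto. auto. }
  assert (HB : is_series (fun m => M * (INR m * Cmod y ^ pred m)) (M * B1 (Cmod y))).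
  { apply Ris_scal. apply B1_is. lra. }
  assert (Hcv : Cis (fun m => c m * RtoC (INR m) * y ^ (pred m))%C (Pder c y)).
  { apply Cis_CSeries. apply (Cis_ex_le _ _ Hb). eexists. apply HB. }
  split; auto. eapply Cis_norm_le. apply Hcv. apply HB. auto.
Qed.

Lemma PS_deriv x : Cmod x < 1 -> exists dl, 0 < dl /\ exists K0, 0 <= K0 /\
  forall c M, (forall m, Cmod (c m) <= M) -> forall y, Cmod (y - x) < dl ->
  Cmod y < 1 /\ Cmod (Pser c y - Pser c x - (y - x) * Pder c x) <= M * K0 * (Cmod (y - x) * Cmod (y - x)).
Proof.
  intros Hx. pose proof (Cmod_ge_0 x). set (r := (1 + Cmod x) / 2).
  assert (Hr : 0 < r < 1) by (unfold r; lra).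
  destruct (sum_k2 r ltac:(lra)) as [S2 HS2].
  assert (HS2p : 0 <= S2).
  { apply (Rle_trans _ (sum_n (fun k => INR k * INR k * r ^ k) O)). rewrite sum_n_R_O. simpl. lra.
    apply Ris_partial_le; auto. intros k. apply Rmult_le_pos. pose proof (pos_INR k); nra. apply pow_le; lra. }
  exists ((1 - Cmod x) / 2). split. lra.
  exists (S2 / (r * r)). split. apply Rdiv_le_0_compat; nra.
  intros c M Hc y Hy.
  assert (HM : 0 <= M) by (eapply Rle_trans; [apply Cmod_ge_0|apply (Hc O)]).
  assert (Hyr : forall z, Cmod (z - x) < (1 - Cmod x)/2 -> Cmod z <= r).
  { intros z Hz. replace z with ((z - x) + x)%C by ring. eapply Rle_trans. apply Cmod_triangle. unfold r. lra. }
  split. pose proof (Hyr y Hy). lra.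
  apply (SF (fun m z => c m * z ^ m)%C (fun m => c m * RtoC (INR m) * x ^ (pred m))%C
            (fun m => M * (INR m * INR m * r ^ m) / (r * r)) (Pser c) x ((1 - Cmod x) / 2)); auto.
  - intros z Hz. apply (PS_cv c M z Hc). pose proof (Hyr z Hz). lra.
  - apply (PD_cv c M x Hc Hx).
  - replace (M * (S2 / (r * r))) with (M * S2 / (r * r)) by (field; lra).
    apply (is_series_scal_r (/ (r * r)) (fun m => M * (INR m * INR m * r ^ m))).
    apply Ris_scal. auto.
  - intros z k Hz. pose proof (mono_bound x z r k (Hyr x ltac:(unfold Cminus; rewrite Cplus_opp_r, Cmod_0; lra)) (Hyr z Hz)) as Hm.
    replace (c k * z ^ k - c k * x ^ k - (z - x) * (c k * RtoC (INR k) * x ^ pred k))%C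
      with (c k * (z ^ k - x ^ k - RtoC (INR k) * x ^ pred k * (z - x)))%C by ring.
    rewrite Cmod_mult. 
    set (Q := Cmod (z ^ k - x ^ k - RtoC (INR k) * x ^ pred k * (z - x))) in *.
    assert (HQ : Q <= INR k * INR k * r ^ k * (Cmod (z - x) * Cmod (z - x)) / (r * r)).
    { apply (Rmult_le_reg_l (r * r)). nra. unfold Rdiv. rewrite (Rmult_comm _ (/ (r*r))), <- Rmult_assoc, Rinv_r by nra. lra. }
    assert (HQ0 : 0 <= Q) by apply Cmod_ge_0.
    eapply Rle_trans. apply Rmult_le_compat. apply Cmod_ge_0. auto. apply Hc. apply HQ.
    right. field. nra.
  - lra.
Qed.

Section Prob.
Variables rho q : R.
Hypothesis Hrho : 0 < rho.
Hypothesis Hq0 : 0 < q.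
Hypothesis Hq1 : q < 1.

Definition w (c : nat) := (1 - q) * q ^ c.

Lemma w_pos c : 0 <= w c.
Proof. unfold w. apply Rmult_le_pos. lra. apply pow_le. lra. Qed.

Lemma w_is : is_series w 1.
Proof. replace 1 with ((1 - q) * / (1 - q)) by (field; lra). unfold w.
  apply Ris_scal. apply is_series_geom. rewrite Rabs_pos_eq; lra. Qed.

Lemma w_ex_bound (f : nat -> R) B : (forall c, Rabs (f c) <= B) -> ex_series (fun c => w c * f c).
Proof.
  intros H. apply (@ex_series_le R_AbsRing R_CompleteNormedModule _ (fun c => B * w c)).
  - intros c. change (Rabs (w c * f c) <= B * w c). rewrite Rabs_mult, Rabs_pos_eq by apply w_pos.
    rewrite Rmult_comm. apply Rmult_le_compat_r. apply w_pos. auto.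
  - exists (B * 1). apply Ris_scal. apply w_is.
Qed.

Lemma nonneg_series_ge0 (b : nat -> R) B : (forall n, 0 <= b n) -> is_series b B -> 0 <= B.
Proof. intros Hb H. eapply Rle_trans; [|apply (Ris_partial_le _ _ Hb H O)]. rewrite sum_n_R_O. auto. Qed.

Lemma w_series_01 (f : nat -> R) : (forall c, 0 <= f c <= 1) -> 0 <= Series (fun c => w c * f c) <= 1.
Proof.
  intros H. assert (Hex : ex_series (fun c => w c * f c)).
  { apply (w_ex_bound f 1). intros c. rewrite Rabs_pos_eq; apply H. }
  split.
  - apply (nonneg_series_ge0 (fun c => w c * f c)). intros c. apply Rmult_le_pos. apply w_pos. apply H.
    apply Series_correct. auto.
  - rewrite <- (is_series_unique w 1 w_is). apply Series_le. intros c. pose proof (w_pos c). pose proof (H c). split; nra.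
    exists 1. apply w_is.
Qed.

Lemma sum_series_swap (f : nat -> nat -> R) M :
  (forall m, ex_series (fun c => w c * f m c)) ->
  ex_series (fun c => w c * sum_n (fun m => f m c) M) /\
  sum_n (fun m => Series (fun c => w c * f m c)) M = Series (fun c => w c * sum_n (fun m => f m c) M).
Proof.
  intros H. induction M.
  - rewrite sum_n_R_O. split.
    + eapply ex_series_ext; [|apply (H O)]. intros c. simpl. rewrite sum_n_R_O. auto.
    + apply Series_ext. intros c. rewrite sum_n_R_O. auto.
  - destruct IHM as [IH1 IH2]. rewrite sum_n_R_Sn, IH2. split.
    + eapply ex_series_ext; [|apply (ex_series_plus _ _ IH1 (H (S M)))]. intros c. rewrite sum_n_R_Sn. rewrite Rmult_plus_distr_l. reflexivity.
    + rewrite <- Series_plus by auto. apply Series_ext. intros c. rewrite sum_n_R_Sn. rewrite Rmult_plus_distr_l. reflexivity.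
Qed.

Notation p := (absorb_prob rho q).

Lemma sum_n_shift0 (a : nat -> R) M : @eq R (sum_n a (S M)) (a O + sum_n (fun m => a (S m)) M).
Proof. induction M. rewrite sum_n_R_Sn, !sum_n_R_O. auto. rewrite sum_n_R_Sn, IHM, (sum_n_R_Sn (fun m => a (S m))). ring. Qed.

Lemma INR_frac_sum n k : (0 < k)%nat -> INR k / INR (n + k) + INR n / INR (n + k) = 1.
Proof. intros Hk. rewrite plus_INR. assert (0 < INR k) by (apply lt_0_INR; auto). pose proof (pos_INR n). field. lra. Qed.

Lemma INR_frac_pos a b : 0 <= INR a / INR b.
Proof. destruct b. simpl. unfold Rdiv. rewrite Rinv_0, Rmult_0_r. lra. apply Rdiv_le_0_compat. apply pos_INR. apply lt_0_INR; lia. Qed.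

Lemma sum_nonneg_r (b : nat -> R) M : (forall i, (i <= M)%nat -> 0 <= b i) -> forall m, (m <= M)%nat -> 0 <= sum_n b m.
Proof. intros H m Hm. induction m. rewrite sum_n_R_O. apply H. lia. rewrite sum_n_R_Sn. pose proof (H (S m) Hm). pose proof (IHm ltac:(lia)). lra. Qed.

Lemma sum_mono_r (b : nat -> R) M : (forall i, (i <= M)%nat -> 0 <= b i) -> forall m, (m <= M)%nat -> sum_n b m <= sum_n b M.
Proof. intros H m Hm. induction M. assert (m = O) by lia. subst. lra.
  destruct (Nat.eq_dec m (S M)). subst; lra. rewrite sum_n_R_Sn. pose proof (H (S M) (le_n _)).
  assert (sum_n b m <= sum_n b M) by (apply IHM; [intros; apply H; lia|lia]). lra. Qed.

Lemma term_le_sum_r (b : nat -> R) M : (forall i, (i <= M)%nat -> 0 <= b i) -> forall m, (m <= M)%nat -> b m <= sum_n b M.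
Proof. intros H m Hm. eapply Rle_trans; [|apply (sum_mono_r b M H m Hm)]. destruct m. rewrite sum_n_R_O; lra.
  rewrite sum_n_R_Sn. pose proof (sum_nonneg_r b M H m ltac:(lia)). lra. Qed.

Lemma p_S_eq m n k' : p (S m) n (S k') =
  rho / (1 + rho) * Series (fun c => w c * p m (n + S c) (S k'))
  + / (1 + rho) * (INR (S k') / INR (n + S k') * p m n k' + INR n / INR (n + S k') * p m (pred n) (S k')).
Proof. reflexivity. Qed.

Lemma p_S0 m n : p (S m) n O = 0.
Proof. reflexivity. Qed.

Lemma sum_n_lin (X Y Z : nat -> R) al be ga de M :
  @eq R (sum_n (fun m => al * X m + be * (ga * Y m + de * Z m)) M)
    (al * sum_n X M + be * (ga * sum_n Y M + de * sum_n Z M)).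
Proof. induction M. rewrite !sum_n_R_O. auto. rewrite !sum_n_R_Sn, IHM. ring. Qed.

Lemma sum_n_zero M : @eq R (sum_n (fun _ => 0) M) 0.
Proof. rewrite sum_n_const. ring. Qed.

Lemma coef_sum n k' : rho / (1 + rho) + / (1 + rho) * (INR (S k') / INR (n + S k') + INR n / INR (n + S k')) = 1.
Proof. rewrite INR_frac_sum by lia. field. lra. Qed.

Lemma coef_facts n k' : 0 <= rho / (1 + rho) /\ 0 <= / (1 + rho) /\ 0 <= INR (S k') / INR (n + S k') /\ 0 <= INR n / INR (n + S k').
Proof. repeat split; try apply INR_frac_pos. apply Rdiv_le_0_compat; lra. apply Rlt_le, Rinv_0_lt_compat. lra. Qed.

Lemma comb_01 al be ga de X Y Z : 0 <= al -> 0 <= be -> 0 <= ga -> 0 <= de -> al + be * (ga + de) = 1 ->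
  0 <= X <= 1 -> 0 <= Y <= 1 -> 0 <= Z <= 1 -> 0 <= al * X + be * (ga * Y + de * Z) <= 1.
Proof. intros. split. assert (0 <= ga * Y) by nra. assert (0 <= de * Z) by nra. nra.
  assert (ga * Y <= ga) by nra. assert (de * Z <= de) by nra. assert (al * X <= al) by nra.
  assert (be * (ga * Y + de * Z) <= be * (ga + de)) by nra. lra. Qed.

Lemma p_01 m : forall n k, 0 <= p m n k <= 1.
Proof.
  induction m; intros n k.
  - simpl. destruct k; lra.
  - destruct k as [|k']. rewrite p_S0. lra.
    rewrite p_S_eq. destruct (coef_facts n k') as (H1 & H2 & H3 & H4).
    apply comb_01; auto. apply coef_sum. apply w_series_01. intros; apply IHm.
Qed.

Lemma p_ex m n k : ex_series (fun c => w c * p m (n + S c) k).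
Proof. apply (w_ex_bound _ 1). intros c. rewrite Rabs_pos_eq; apply p_01. Qed.

Lemma p_sum M : forall n k, sum_n (fun m => p m n k) M <= 1.
Proof.
  induction M; intros n k.
  - rewrite sum_n_R_O. apply p_01.
  - destruct k as [|k'].
    + rewrite sum_n_shift0. rewrite (sum_n_ext _ (fun _ => 0)) by (intros; apply p_S0). rewrite sum_n_zero. simpl. lra.
    + rewrite sum_n_shift0. rewrite (sum_n_ext _ _ M (fun m => p_S_eq m n k')).
      rewrite sum_n_lin. destruct (sum_series_swap (fun m c => p m (n + S c) (S k')) M (fun m => p_ex m n (S k'))) as [_ E].
      rewrite E. change (p O n (S k')) with 0. rewrite Rplus_0_l.
      destruct (coef_facts n k') as (H1 & H2 & H3 & H4).
      apply comb_01; auto. apply coef_sum.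
      apply w_series_01. intros c. split. apply (sum_nonneg_r _ M). intros; apply p_01. lia. apply IHM.
      split. apply (sum_nonneg_r _ M). intros; apply p_01. lia. apply IHM.
      split. apply (sum_nonneg_r _ M). intros; apply p_01. lia. apply IHM.
Qed.

Lemma p_series n k : exists P, is_series (fun m => p m n k) P /\ 0 <= P <= 1.
Proof.
  destruct (ex_finite_lim_seq_incr (sum_n (fun m => p m n k)) 1) as [P HP].
  - intros m. rewrite sum_n_R_Sn. pose proof (p_01 (S m) n k). lra.
  - intros m. apply p_sum.
  - exists P. assert (H : is_series (fun m => p m n k) P) by exact HP. split; auto. split.
    apply (nonneg_series_ge0 _ _ (fun m => proj1 (p_01 m n k)) H).
    apply (is_lim_seq_le (sum_n (fun m => p m n k)) (fun _ => 1) P 1). intros; apply p_sum. auto. apply is_lim_seq_const.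
Qed.

End Prob.

Lemma Re_le_Cmod (c : C) : Re c <= Cmod c.
Proof. eapply Rle_trans. apply Rle_abs. apply re_le_Cmod. Qed.

Lemma RtoC_lin a x b c y d u : RtoC (a * x + b * (c * y + d * u)) = (RtoC a * RtoC x + RtoC b * (RtoC c * RtoC y + RtoC d * RtoC u))%C.
Proof. apply injective_projections; simpl; ring. Qed.

Section Est.
Variables (rho q : R) (s : C).
Hypothesis Hrho : 0 < rho.
Hypothesis Hq0 : 0 < q.
Hypothesis Hq1 : q < 1.
Hypothesis Hs : 0 <= Re s.

Notation p := (absorb_prob rho q).
Notation w := (w q).
Definition z := (RtoC (1 + rho) / (RtoC (1 + rho) + s))%C.
Notation est := (estar rho q s).

Lemma den_mod : 1 + rho <= Cmod (RtoC (1 + rho) + s).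
Proof. eapply Rle_trans; [|apply Re_le_Cmod]. unfold Re in *. simpl. lra. Qed.

Lemma den_ne : (RtoC (1 + rho) + s)%C <> RtoC 0.
Proof. intros E. pose proof den_mod. rewrite E, Cmod_0 in H. lra. Qed.

Lemma one_rho_ne : RtoC (1 + rho) <> RtoC 0.
Proof. intros E. apply RtoC_inj in E. lra. Qed.

Lemma z_mod : Cmod z <= 1.
Proof. unfold z. rewrite Cmod_div by (apply den_ne). rewrite Cmod_R, Rabs_pos_eq by lra.
  pose proof den_mod. apply (Rmult_le_reg_r (Cmod (RtoC (1 + rho) + s))). lra.
  unfold Rdiv. rewrite Rmult_assoc, Rinv_l by lra. lra. Qed.

Lemma zpow_le m : Cmod z ^ m <= 1.
Proof. rewrite <- (pow1 m). apply pow_incr. split. apply Cmod_ge_0. apply z_mod. Qed.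

Notation p01 := (p_01 rho q Hrho Hq0 Hq1).

Lemma pz_bound m n k : Cmod (RtoC (p m n k) * z ^ m)%C <= p m n k.
Proof. rewrite Cmod_mult, Cmod_R, Cmod_pow, Rabs_pos_eq by apply p01.
  pose proof (p01 m n k). pose proof (zpow_le m). pose proof (pow_le (Cmod z) m (Cmod_ge_0 z)).
  nra. Qed.

Lemma est_is n k : Cis (fun m => RtoC (p m n k) * z ^ m)%C (est n k) /\ Cmod (est n k) <= 1.
Proof.
  destruct (p_series rho q Hrho Hq0 Hq1 n k) as [P [HP HP1]].
  assert (H : Cis (fun m => RtoC (p m n k) * z ^ m)%C (est n k)).
  { unfold estar. apply Cis_CSeries. apply (Cis_ex_le _ _ (fun m => pz_bound m n k)). exists P. auto. }
  split; auto. eapply Rle_trans. apply (Cis_norm_le _ _ _ _ H HP). intros m; apply pz_bound. lra.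
Qed.

Lemma est_0 n : est n O = RtoC 1.
Proof.
  apply CSeries_eq. replace (RtoC 1) with (RtoC 0 + RtoC (p O n O) * z ^ O)%C.
  apply Cis_shift. eapply Cis_ext; [|apply Cis_zero]. intros m. rewrite p_S0. ring. simpl. ring.
Qed.

Definition Wc n k := CSeries (fun c => RtoC (w c) * est (n + S c) k)%C.

Lemma Wc_is n k : Cis (fun c => RtoC (w c) * est (n + S c) k)%C (Wc n k).
Proof.
  apply Cis_CSeries. apply (Cis_ex_le _ w). intros c. pose proof (w_pos q Hq0 Hq1 c).
  rewrite Cmod_mult, Cmod_R, Rabs_pos_eq by lra.
  pose proof (proj2 (est_is (n + S c) k)). nra.
  exists 1. apply w_is; auto.
Qed.

Lemma est_rec n k' :
  ((RtoC (1 + rho) + s) * est n (S k') = RtoC rho * Wc n (S k')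
     + RtoC (INR (S k') / INR (n + S k')) * est n k' + RtoC (INR n / INR (n + S k')) * est (pred n) (S k'))%C.
Proof.
  set (Ser := fun m => Series (fun c => w c * p m (n + S c) (S k'))).
  destruct (est_is n (S k')) as [Ha _].
  pose proof (Cis_unshift _ _ Ha) as Hsh.
  assert (Hfub : Cis (fun m => RtoC (Ser m) * z ^ m)%C (Wc n (S k'))).
  { apply (Cfubini (fun m c => RtoC (w c * p m (n + S c) (S k')) * z ^ m)%C _ (fun c => RtoC (w c) * est (n + S c) (S k'))%C
       (fun c => w c * Series (fun m => p m (n + S c) (S k') * Cmod z ^ m))).
    - intros m.
      pose proof (Cis_RtoC _ _ (Series_correct _ (p_ex rho q Hrho Hq0 Hq1 m n (S k')))) as H.
      pose proof (Cis_scal (z ^ m) _ _ H) as H'.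
      replace (RtoC (Ser m) * z ^ m)%C with (z ^ m * RtoC (Ser m))%C by ring.
      eapply Cis_ext; [|apply H']. intros c. simpl. ring.
    - intros c.
      assert (Hex : ex_series (fun m => p m (n + S c) (S k') * Cmod z ^ m)).
      { destruct (p_series rho q Hrho Hq0 Hq1 (n + S c) (S k')) as [P [HP _]].
        apply (ex_series_le_R _ (fun m => p m (n + S c) (S k'))). intros m. pose proof (p01 m (n + S c) (S k')).
        pose proof (zpow_le m). pose proof (pow_le (Cmod z) m (Cmod_ge_0 z)). split; nra. exists P; auto. }
      eapply is_series_ext; [|apply (Ris_scal (w c)), (Series_correct _ Hex)].
      intros m. simpl. rewrite Cmod_mult, Cmod_R, Cmod_pow. rewrite Rabs_pos_eq. ring.
      apply Rmult_le_pos. apply w_pos; auto. apply p01.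
    - apply (ex_series_le_R _ w). intros c.
      destruct (p_series rho q Hrho Hq0 Hq1 (n + S c) (S k')) as [P [HP HP1]].
      assert (H0 : 0 <= Series (fun m => p m (n + S c) (S k') * Cmod z ^ m) <= 1).
      { assert (Hb : forall m, 0 <= p m (n + S c) (S k') * Cmod z ^ m <= p m (n + S c) (S k')).
        { intros m. pose proof (p01 m (n + S c) (S k')).
          pose proof (zpow_le m). pose proof (pow_le (Cmod z) m (Cmod_ge_0 z)). split; nra. }
        split.
        - apply (nonneg_series_ge0 (fun m => p m (n + S c) (S k') * Cmod z ^ m)). intros; apply Hb.
          apply Series_correct. apply (ex_series_le_R _ (fun m => p m (n + S c) (S k'))). auto. exists P; auto.
        - eapply Rle_trans. apply Series_le. apply Hb. exists P; auto. rewrite (is_series_unique _ _ HP). lra. }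
      pose proof (w_pos q Hq0 Hq1 c). split; nra.
      exists 1. apply w_is; auto.
    - intros c. destruct (est_is (n + S c) (S k')) as [H _].
      eapply Cis_ext; [|apply (Cis_scal (RtoC (w c))), H]. intros m. simpl. rewrite RtoC_mult. ring.
    - apply Wc_is. }
  destruct (est_is n k') as [He1 _]. destruct (est_is (pred n) (S k')) as [He2 _].
  set (al := rho / (1 + rho)). set (be := / (1 + rho)). set (ga := INR (S k') / INR (n + S k')).
  set (de := INR n / INR (n + S k')).
  assert (Hcomb : Cis (fun m => RtoC (p (S m) n (S k')) * z ^ (S m))%C
     (z * (RtoC al * Wc n (S k') + RtoC be * (RtoC ga * est n k' + RtoC de * est (pred n) (S k'))))%C).
  { eapply Cis_ext; [| apply Cis_scal, Cis_plus; [apply Cis_scal, Hfub | apply Cis_scal, Cis_plus; apply Cis_scal; [apply He1|apply He2]]].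
    intros m. rewrite (Cpow_S z m). rewrite (p_S_eq rho q m n k'). fold al be ga de. fold (Ser m).
    rewrite RtoC_lin. ring. }
  pose proof (Cis_unique _ _ _ Hsh Hcomb) as E.
  change (p O n (S k')) with 0 in E.
  assert (Ea : est n (S k') = (z * (RtoC al * Wc n (S k') + RtoC be * (RtoC ga * est n k' + RtoC de * est (pred n) (S k'))))%C).
  { rewrite <- E. simpl. ring. }
  rewrite Ea. unfold z.
  assert (H1 : (RtoC (1 + rho) * RtoC al)%C = RtoC rho) by (rewrite <- RtoC_mult; f_equal; unfold al; field; lra).
  assert (H2 : (RtoC (1 + rho) * RtoC be)%C = RtoC 1) by (rewrite <- RtoC_mult; f_equal; unfold be; field; lra).
  pose proof den_ne as Hd.
  replace ((RtoC (1 + rho) + s) * (RtoC (1 + rho) / (RtoC (1 + rho) + s) * (RtoC al * Wc n (S k') + RtoC be * (RtoC ga * est n k' + RtoC de * est (pred n) (S k')))))%C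
    with (RtoC (1 + rho) * RtoC al * Wc n (S k') + RtoC (1 + rho) * RtoC be * (RtoC ga * est n k' + RtoC de * est (pred n) (S k')))%C
    by (field; auto).
  rewrite H1, H2. ring.
Qed.

End Est.

Lemma CSeries_ext a b : (forall n, a n = b n) -> CSeries a = CSeries b.
Proof. intros H. unfold CSeries. f_equal; apply Series_ext; intros n; rewrite H; auto. Qed.

Lemma geomC (t : nat -> C) M r : 0 <= r < 1 -> (forall k, Cmod (t k) <= M * r ^ k) ->
  Cis t (CSeries t) /\ Cmod (CSeries t) <= M / (1 - r).
Proof.
  intros Hr H. assert (Hc : Cis t (CSeries t)).
  { apply Cis_CSeries. apply (Cis_ex_le _ _ H). eexists. apply geom_is. auto. }
  split; auto. eapply Cis_norm_le. apply Hc. apply geom_is. auto. auto.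
Qed.

Lemma CfubP (a : nat -> nat -> C) (al be : nat -> R) :
  (forall i j, Cmod (a i j) <= al i * be j) -> (forall i, 0 <= al i) -> (forall j, 0 <= be j) ->
  ex_series al -> ex_series be ->
  (forall i, Cis (fun j => a i j) (CSeries (fun j => a i j))) /\
  (forall j, Cis (fun i => a i j) (CSeries (fun i => a i j))) /\
  Cis (fun i => CSeries (fun j => a i j)) (CSeries (fun j => CSeries (fun i => a i j))).
Proof.
  intros H Ha Hb [SA HSA] [SB HSB].
  assert (H1 : forall i, Cis (fun j => a i j) (CSeries (fun j => a i j))).
  { intros i. apply Cis_CSeries. apply (Cis_ex_le _ _ (H i)). exists (al i * SB). apply Ris_scal; auto. }
  assert (H4 : forall j, Cis (fun i => a i j) (CSeries (fun i => a i j))).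
  { intros j. apply Cis_CSeries. apply (Cis_ex_le _ (fun i => be j * al i)).
    intros i. rewrite Rmult_comm. apply H. exists (be j * SA). apply Ris_scal; auto. }
  assert (HD : forall j, is_series (fun i => Cmod (a i j)) (Series (fun i => Cmod (a i j)))).
  { intros j. apply Series_correct. apply (ex_series_le_R _ (fun i => be j * al i)).
    intros i. split. apply Cmod_ge_0. rewrite Rmult_comm. apply H. exists (be j * SA). apply Ris_scal; auto. }
  assert (HDb : forall j, Series (fun i => Cmod (a i j)) <= SA * be j).
  { intros j. rewrite <- (is_series_unique _ _ HSA). rewrite <- Series_scal_r. apply Series_le.
    intros i. split. apply Cmod_ge_0. apply H. eexists. apply is_series_scal_r. apply HSA. }
  split; auto. split; auto.
  apply (Cfubini a _ (fun j => CSeries (fun i => a i j)) (fun j => Series (fun i => Cmod (a i j)))); auto.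
  - apply (ex_series_le_R _ (fun j => SA * be j)). intros j. split; auto.
    apply (nonneg_series_ge0 _ _ (fun i => Cmod_ge_0 _) (HD j)). exists (SA * SB). apply Ris_scal; auto.
  - apply Cis_CSeries. apply (Cis_ex_le _ (fun j => SA * be j)). intros j.
    eapply Rle_trans. apply (Cis_norm_le _ _ _ _ (H4 j) (HD j)). intros; apply Rle_refl. apply HDb. exists (SA * SB). apply Ris_scal; auto.
Qed.

Section GF.
Variables (rho q : R) (s : C).
Hypothesis Hrho : 0 < rho.
Hypothesis Hq0 : 0 < q.
Hypothesis Hq1 : q < 1.
Hypothesis Hs : 0 <= Re s.

Notation est := (estar rho q s).
Notation qC := (RtoC q).

Lemma est_bd n b : Cmod (est n b) <= 1.
Proof. exact (proj2 (est_is rho q s Hrho Hq0 Hq1 Hs n b)). Qed.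

Definition cA n b : C := match b with O => RtoC 0 | S _ => est n b end.
Lemma cA_bd n b : Cmod (cA n b) <= 1.
Proof. destruct b; simpl. rewrite Cmod_0; lra. apply est_bd. Qed.

Definition A n w := CSeries (fun b => est n (S b) * w ^ (S b))%C.
Definition A' n w := Pder (cA n) w.
Definition MA (w : C) := 1 / (1 - Cmod w).
Definition MA' (w : C) := 1 * B1 (Cmod w).

Lemma A_eq n w : Cmod w < 1 -> A n w = Pser (cA n) w.
Proof.
  intros Hw. destruct (PS_cv (cA n) 1 w (cA_bd n) Hw) as [H _]. pose proof (Cis_unshift _ _ H) as H'.
  unfold A. apply CSeries_eq. replace (Pser (cA n) w) with (Pser (cA n) w - cA n O * w ^ O)%C by (simpl; ring).
  eapply Cis_ext; [|apply H']. intros k. reflexivity.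
Qed.

Lemma A_is n w : Cmod w < 1 -> Cis (fun b => cA n b * w ^ b)%C (A n w) /\ Cmod (A n w) <= MA w.
Proof. intros Hw. rewrite A_eq by auto. apply (PS_cv (cA n) 1 w (cA_bd n) Hw). Qed.

Lemma A'_is n w : Cmod w < 1 -> Cis (fun b => cA n b * RtoC (INR b) * w ^ (pred b))%C (A' n w) /\ Cmod (A' n w) <= MA' w.
Proof. intros Hw. apply (PD_cv (cA n) 1 w (cA_bd n) Hw). Qed.

Lemma qpow_mod c : Cmod (qC ^ c) = q ^ c.
Proof. rewrite Cmod_pow, Cmod_R, Rabs_pos_eq by lra. auto. Qed.

Definition Phi j w := CSeries (fun c => qC ^ c * A (j + S c) w)%C.
Definition Phi' j w := CSeries (fun c => qC ^ c * A' (j + S c) w)%C.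

Lemma Phi_is j w : Cmod w < 1 -> Cis (fun c => qC ^ c * A (j + S c) w)%C (Phi j w) /\ Cmod (Phi j w) <= MA w / (1 - q).
Proof. intros Hw. apply geomC. lra. intros c. rewrite Cmod_mult, qpow_mod, Rmult_comm.
  apply Rmult_le_compat_r. apply pow_le; lra. apply A_is; auto. Qed.

Lemma Phi'_is j w : Cmod w < 1 -> Cis (fun c => qC ^ c * A' (j + S c) w)%C (Phi' j w) /\ Cmod (Phi' j w) <= MA' w / (1 - q).
Proof. intros Hw. apply geomC. lra. intros c. rewrite Cmod_mult, qpow_mod, Rmult_comm.
  apply Rmult_le_compat_r. apply pow_le; lra. apply A'_is; auto. Qed.

Lemma Phi_rec j w : Cmod w < 1 -> Phi j w = (A (S j) w + qC * Phi (S j) w)%C.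
Proof.
  intros Hw. destruct (Phi_is (S j) w Hw) as [H _]. pose proof (Cis_scal qC _ _ H) as H2.
  assert (H3 : Cis (fun c => qC ^ c * A (j + S c) w)%C (qC * Phi (S j) w + qC ^ O * A (j + S O) w)%C).
  { apply Cis_shift. eapply Cis_ext; [|apply H2]. intros c. simpl.
    replace (j + S (S c))%nat with (S (j + S c))%nat by lia. ring. }
  destruct (Phi_is j w Hw) as [H4 _]. rewrite (Cis_unique _ _ _ H4 H3).
  replace (j + S O)%nat with (S j) by lia. simpl. ring.
Qed.

Lemma Phi'_rec j w : Cmod w < 1 -> Phi' j w = (A' (S j) w + qC * Phi' (S j) w)%C.
Proof.
  intros Hw. destruct (Phi'_is (S j) w Hw) as [H _]. pose proof (Cis_scal qC _ _ H) as H2.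
  assert (H3 : Cis (fun c => qC ^ c * A' (j + S c) w)%C (qC * Phi' (S j) w + qC ^ O * A' (j + S O) w)%C).
  { apply Cis_shift. eapply Cis_ext; [|apply H2]. intros c. simpl.
    replace (j + S (S c))%nat with (S (j + S c))%nat by lia. ring. }
  destruct (Phi'_is j w Hw) as [H4 _]. rewrite (Cis_unique _ _ _ H4 H3).
  replace (j + S O)%nat with (S j) by lia. simpl. ring.
Qed.

Definition G w := Egen rho q s qC w.
Definition G' w := CSeries (fun n => qC ^ n * A' n w)%C.

Lemma G_is w : Cmod w < 1 -> Cis (fun n => qC ^ n * A n w)%C (G w).
Proof. intros Hw. change (G w) with (CSeries (fun n => qC ^ n * A n w)%C).
  apply (geomC _ (MA w) q). lra. intros n. rewrite Cmod_mult, qpow_mod, Rmult_comm.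
  apply Rmult_le_compat_r. apply pow_le; lra. apply A_is; auto. Qed.

Lemma G'_is w : Cmod w < 1 -> Cis (fun n => qC ^ n * A' n w)%C (G' w).
Proof. intros Hw. apply (geomC _ (MA' w) q). lra. intros n. rewrite Cmod_mult, qpow_mod, Rmult_comm.
  apply Rmult_le_compat_r. apply pow_le; lra. apply A'_is; auto. Qed.

Lemma G_eq w : Cmod w < 1 -> G w = (A O w + qC * Phi O w)%C.
Proof.
  intros Hw. pose proof (Cis_unshift _ _ (G_is w Hw)) as H1.
  destruct (Phi_is O w Hw) as [H2 _]. pose proof (Cis_scal qC _ _ H2) as H3.
  assert (E : (G w - qC ^ O * A O w)%C = (qC * Phi O w)%C).
  { apply (Cis_unique _ _ _ H1). eapply Cis_ext; [|apply H3]. intros c. simpl. ring. }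
  replace (G w) with ((G w - qC ^ O * A O w) + qC ^ O * A O w)%C by ring. rewrite E. simpl. ring.
Qed.

Lemma G'_eq w : Cmod w < 1 -> G' w = (A' O w + qC * Phi' O w)%C.
Proof.
  intros Hw. pose proof (Cis_unshift _ _ (G'_is w Hw)) as H1.
  destruct (Phi'_is O w Hw) as [H2 _]. pose proof (Cis_scal qC _ _ H2) as H3.
  assert (E : (G' w - qC ^ O * A' O w)%C = (qC * Phi' O w)%C).
  { apply (Cis_unique _ _ _ H1). eapply Cis_ext; [|apply H3]. intros c. simpl. ring. }
  replace (G' w) with ((G' w - qC ^ O * A' O w) + qC ^ O * A' O w)%C by ring. rewrite E. simpl. ring.
Qed.

End GF.

Lemma Cis_eq_terms a b la lb : Cis a la -> Cis b lb -> (forall n, a n = b n) -> la = lb.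
Proof. intros Ha Hb E. apply (Cis_unique b). eapply Cis_ext; [|apply Ha]. auto. auto. Qed.

Lemma Cis_scal_r c a l : Cis a l -> Cis (fun n => a n * c)%C (l * c)%C.
Proof. intros H. replace (l * c)%C with (c * l)%C by ring. eapply Cis_ext; [|apply (Cis_scal c _ _ H)]. intros; simpl; ring. Qed.

Section GF2.
Variables (rho q : R) (s : C).
Hypothesis Hrho : 0 < rho.
Hypothesis Hq0 : 0 < q.
Hypothesis Hq1 : q < 1.
Hypothesis Hs : 0 <= Re s.

Notation est := (estar rho q s).
Notation qC := (RtoC q).
Notation cA := (cA rho q s).
Notation A := (A rho q s).
Notation A' := (A' rho q s).
Notation Phi := (Phi rho q s).
Notation Phi' := (Phi' rho q s).

Definition f n b := CSeries (fun c => qC ^ c * cA (n + S c) b)%C.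

Lemma f_is n b : Cis (fun c => qC ^ c * cA (n + S c) b)%C (f n b) /\ Cmod (f n b) <= 1 / (1 - q).
Proof. apply geomC. lra. intros c. rewrite Cmod_mult, (qpow_mod q Hq0), Rmult_comm.
  apply Rmult_le_compat_r. apply pow_le; lra. apply (cA_bd rho q s Hrho Hq0 Hq1 Hs). Qed.

Lemma f_0 n : f n O = RtoC 0.
Proof. apply CSeries_eq. eapply Cis_ext; [|apply Cis_zero]. intros c. simpl. ring. Qed.

Lemma Wc_f n b' : Wc rho q s n (S b') = (RtoC (1 - q) * f n (S b'))%C.
Proof. apply CSeries_eq. destruct (f_is n (S b')) as [H _]. eapply Cis_ext; [|apply (Cis_scal (RtoC (1 - q))), H].
  intros c. unfold w. simpl cA. rewrite RtoC_mult, RtoC_pow. ring. Qed.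

Lemma Fub1 n w : Cmod w < 1 -> Cis (fun b => f n b * w ^ b)%C (Phi n w).
Proof.
  intros Hw. pose proof (Cmod_ge_0 w).
  destruct (CfubP (fun b c => qC ^ c * cA (n + S c) b * w ^ b)%C (fun b => Cmod w ^ b) (fun c => q ^ c)) as (H1 & H2 & H3).
  - intros b c. rewrite !Cmod_mult, (qpow_mod q Hq0), Cmod_pow. pose proof (cA_bd rho q s Hrho Hq0 Hq1 Hs (n + S c) b).
    pose proof (pow_le q c ltac:(lra)). pose proof (pow_le _ b H).
    assert (0 <= q ^ c * Cmod w ^ b) by nra. pose proof (Cmod_ge_0 (cA (n + S c) b)). nra.
  - intros; apply pow_le; auto.
  - intros; apply pow_le; lra.
  - apply ex_series_geom. rewrite Rabs_pos_eq; auto.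
  - apply ex_series_geom. rewrite Rabs_pos_eq; lra.
  - assert (E1 : forall b, CSeries (fun c => qC ^ c * cA (n + S c) b * w ^ b)%C = (f n b * w ^ b)%C).
    { intros b. apply CSeries_eq. destruct (f_is n b) as [Hf _]. eapply Cis_ext; [|apply (Cis_scal_r (w ^ b)), Hf].
      intros c. cbv beta. ring. }
    assert (E2 : forall c, CSeries (fun b => qC ^ c * cA (n + S c) b * w ^ b)%C = (qC ^ c * A (n + S c) w)%C).
    { intros c. apply CSeries_eq. destruct (A_is rho q s Hrho Hq0 Hq1 Hs (n + S c) w Hw) as [Ha _].
      eapply Cis_ext; [|apply (Cis_scal (qC ^ c)), Ha]. intros b. cbv beta. ring. }
    rewrite (CSeries_ext _ _ E2) in H3. eapply Cis_ext; [|apply H3]. intros b. apply E1.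
Qed.

Lemma Fub2 n w : Cmod w < 1 -> Cis (fun b => f n b * RtoC (INR b) * w ^ (pred b))%C (Phi' n w).
Proof.
  intros Hw. pose proof (Cmod_ge_0 w).
  destruct (CfubP (fun b c => qC ^ c * cA (n + S c) b * RtoC (INR b) * w ^ (pred b))%C (fun b => INR b * Cmod w ^ (pred b)) (fun c => q ^ c)) as (H1 & H2 & H3).
  - intros b c. rewrite !Cmod_mult, (qpow_mod q Hq0), Cmod_pow, Cmod_R, Rabs_pos_eq by apply pos_INR.
    pose proof (cA_bd rho q s Hrho Hq0 Hq1 Hs (n + S c) b).
    pose proof (pow_le q c ltac:(lra)). pose proof (pow_le _ (pred b) H). pose proof (pos_INR b).
    pose proof (Cmod_ge_0 (cA (n + S c) b)).
    assert (0 <= INR b * Cmod w ^ pred b) by nra. assert (0 <= q ^ c * (INR b * Cmod w ^ pred b)) by nra. nra.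
  - intros; apply Rmult_le_pos; [apply pos_INR|apply pow_le; auto].
  - intros; apply pow_le; lra.
  - apply sum_k1. auto.
  - apply ex_series_geom. rewrite Rabs_pos_eq; lra.
  - assert (E1 : forall b, CSeries (fun c => qC ^ c * cA (n + S c) b * RtoC (INR b) * w ^ (pred b))%C = (f n b * RtoC (INR b) * w ^ (pred b))%C).
    { intros b. apply CSeries_eq. destruct (f_is n b) as [Hf _]. replace (f n b * RtoC (INR b) * w ^ (pred b))%C with (f n b * (RtoC (INR b) * w ^ (pred b)))%C by ring.
      eapply Cis_ext; [|apply (Cis_scal_r (RtoC (INR b) * w ^ (pred b))), Hf].
      intros c. cbv beta. ring. }
    assert (E2 : forall c, CSeries (fun b => qC ^ c * cA (n + S c) b * RtoC (INR b) * w ^ (pred b))%C = (qC ^ c * A' (n + S c) w)%C).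
    { intros c. apply CSeries_eq. destruct (A'_is rho q s Hrho Hq0 Hq1 Hs (n + S c) w Hw) as [Ha _].
      eapply Cis_ext; [|apply (Cis_scal (qC ^ c)), Ha]. intros b. cbv beta. ring. }
    rewrite (CSeries_ext _ _ E2) in H3. eapply Cis_ext; [|apply H3]. intros b. apply E1.
Qed.

Lemma term_id n b w :
  ((RtoC (1 + rho) + s) * (RtoC (INR n) * (cA n b * w ^ b) + w * (cA n b * RtoC (INR b) * w ^ (pred b))))%C
  = (RtoC rho * RtoC (1 - q) * (RtoC (INR n) * (f n b * w ^ b) + w * (f n b * RtoC (INR b) * w ^ (pred b)))
     + RtoC (INR b) * est n (pred b) * w ^ b + RtoC (INR n) * (cA (pred n) b * w ^ b))%C.
Proof.
  destruct b as [|b'].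
  - rewrite f_0. simpl cA. change (INR 0) with 0. ring.
  - simpl cA. simpl pred.
    replace ((RtoC (1 + rho) + s) * (RtoC (INR n) * (est n (S b') * w ^ S b') + w * (est n (S b') * RtoC (INR (S b')) * w ^ b')))%C
      with ((RtoC (INR n) + RtoC (INR (S b'))) * ((RtoC (1 + rho) + s) * est n (S b')) * w ^ S b')%C
      by (rewrite Cpow_S; ring).
    rewrite (est_rec rho q s Hrho Hq0 Hq1 Hs n b'), Wc_f.
    assert (HN : INR (n + S b') <> 0) by (apply not_0_INR; lia).
    rewrite !RtoC_div by auto. rewrite (Cpow_S w b').
    rewrite plus_INR in *. rewrite RtoC_plus.
    assert (HN' : (RtoC (INR n) + RtoC (INR (S b')))%C <> RtoC 0).
    { rewrite <- RtoC_plus. intros E. apply RtoC_inj in E. auto. }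
    field. auto.
Qed.

Lemma est_series n w : Cmod w < 1 -> Cis (fun b => est n b * w ^ b)%C (A n w + RtoC 1).
Proof.
  intros Hw. destruct (A_is rho q s Hrho Hq0 Hq1 Hs n w Hw) as [H _].
  pose proof (Cis_unshift _ _ H) as H1.
  replace (A n w + RtoC 1)%C with ((A n w - cA n O * w ^ O) + est n O * w ^ O)%C
    by (rewrite (est_0 rho q s); simpl; ring).
  apply Cis_shift. eapply Cis_ext; [|apply H1]. intros b. reflexivity.
Qed.

Lemma T6 n w : Cmod w < 1 -> Cis (fun b => RtoC (INR b) * est n (pred b) * w ^ b)%C (w + w * A n w + w * w * A' n w)%C.
Proof.
  intros Hw. destruct (A'_is rho q s Hrho Hq0 Hq1 Hs n w Hw) as [H' _].
  pose proof (est_series n w Hw) as He.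
  replace (w + w * A n w + w * w * A' n w)%C with ((w * (A n w + RtoC 1) + w * w * A' n w) + RtoC (INR 0) * est n (pred 0) * w ^ O)%C
    by (change (INR 0) with 0; simpl; ring).
  apply Cis_shift.
  eapply Cis_ext; [|apply Cis_plus; [apply (Cis_scal w), He | apply (Cis_scal (w * w)), H']].
  intros b. cbv beta. rewrite S_INR, RtoC_plus. destruct b.
  - simpl. change (INR 0) with 0. ring.
  - simpl pred. simpl cA. rewrite !Cpow_S. ring.
Qed.

Lemma In_id n w : Cmod w < 1 ->
  ((RtoC (1 + rho) + s) * (RtoC (INR n) * A n w + w * A' n w))%C
  = (RtoC rho * RtoC (1 - q) * (RtoC (INR n) * Phi n w + w * Phi' n w)
     + (w + w * A n w + w * w * A' n w) + RtoC (INR n) * A (pred n) w)%C.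
Proof.
  intros Hw.
  destruct (A_is rho q s Hrho Hq0 Hq1 Hs n w Hw) as [T1 _].
  destruct (A'_is rho q s Hrho Hq0 Hq1 Hs n w Hw) as [T2 _].
  pose proof (Fub1 n w Hw) as T3. pose proof (Fub2 n w Hw) as T4.
  destruct (A_is rho q s Hrho Hq0 Hq1 Hs (pred n) w Hw) as [T5 _].
  pose proof (T6 n w Hw) as T6'.
  eapply Cis_eq_terms.
  - apply (Cis_scal (RtoC (1 + rho) + s)), Cis_plus; [apply (Cis_scal (RtoC (INR n))), T1 | apply (Cis_scal w), T2].
  - apply Cis_plus; [apply Cis_plus|].
    + apply (Cis_scal (RtoC rho * RtoC (1 - q))), Cis_plus; [apply (Cis_scal (RtoC (INR n))), T3 | apply (Cis_scal w), T4].
    + apply T6'.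
    + apply (Cis_scal (RtoC (INR n))), T5.
  - intros b. cbv beta. apply term_id.
Qed.

End GF2.

Lemma Cis_geom (u : C) : Cmod u < 1 -> Cis (fun n => u ^ n)%C (/ (RtoC 1 - u))%C.
Proof.
  intros Hu. destruct (PS_cv (fun _ => RtoC 1) 1 u ltac:(intros; cbv beta; rewrite Cmod_R, Rabs_R1; lra) Hu) as [H _].
  set (L := Pser (fun _ => RtoC 1) u) in *.
  assert (H1 : Cis (fun n => u ^ n)%C L) by (eapply Cis_ext; [|apply H]; intros; cbv beta; ring).
  pose proof (Cis_unshift _ _ H1) as H2. pose proof (Cis_scal u _ _ H1) as H3.
  assert (E : (L - u ^ O)%C = (u * L)%C).
  { apply (Cis_unique _ _ _ H2). eapply Cis_ext; [|apply H3]. intros; cbv beta. simpl. ring. }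
  assert (Hne : (RtoC 1 - u)%C <> RtoC 0).
  { intros E'. assert (u = RtoC 1) by (replace u with (RtoC 1 - (RtoC 1 - u))%C by ring; rewrite E'; ring).
    subst. rewrite Cmod_1 in Hu. lra. }
  assert (EL : L = (/ (RtoC 1 - u))%C).
  { transitivity ((L - u * L) / (RtoC 1 - u))%C. field; auto. rewrite <- E. simpl. field. auto. }
  rewrite <- EL. auto.
Qed.

Lemma upred (u : C) n : (u * (RtoC (INR n) * u ^ pred n))%C = (RtoC (INR n) * u ^ n)%C.
Proof. destruct n. simpl. change (INR 0) with 0. ring. simpl. ring. Qed.

Section GF3.
Variables (rho q : R) (s : C).
Hypothesis Hrho : 0 < rho.
Hypothesis Hq0 : 0 < q.
Hypothesis Hq1 : q < 1.
Hypothesis Hs : 0 <= Re s.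

Notation est := (estar rho q s).
Notation qC := (RtoC q).
Notation cA := (cA rho q s).
Notation A := (A rho q s).
Notation A' := (A' rho q s).
Notation Phi := (Phi rho q s).
Notation Phi' := (Phi' rho q s).
Notation G := (G rho q s).
Notation G' := (G' rho q s).
Notation E := (Egen rho q s).

Definition Ft u w := Pser (fun j => Phi j w) u.
Definition Fu u w := Pder (fun j => Phi j w) u.
Definition Fv u w := Pser (fun j => Phi' j w) u.
Definition Eu u w := Pder (fun n => A n w) u.
Definition Ev u w := Pser (fun n => A' n w) u.

Notation AB w := (A_is rho q s Hrho Hq0 Hq1 Hs _ w).

Lemma Abd n w : Cmod w < 1 -> Cmod (A n w) <= MA w.
Proof. intros Hw. apply (A_is rho q s Hrho Hq0 Hq1 Hs n w Hw). Qed.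
Lemma A'bd n w : Cmod w < 1 -> Cmod (A' n w) <= MA' w.
Proof. intros Hw. apply (A'_is rho q s Hrho Hq0 Hq1 Hs n w Hw). Qed.
Lemma Phibd n w : Cmod w < 1 -> Cmod (Phi n w) <= MA w / (1 - q).
Proof. intros Hw. apply (Phi_is rho q s Hrho Hq0 Hq1 Hs n w Hw). Qed.
Lemma Phi'bd n w : Cmod w < 1 -> Cmod (Phi' n w) <= MA' w / (1 - q).
Proof. intros Hw. apply (Phi'_is rho q s Hrho Hq0 Hq1 Hs n w Hw). Qed.

Lemma e1 u w : Cmod u < 1 -> Cmod w < 1 -> Cis (fun n => u ^ n * A n w)%C (E u w).
Proof.
  intros Hu Hw. destruct (PS_cv (fun n => A n w) _ u (fun n => Abd n w Hw) Hu) as [H _].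
  change (E u w) with (CSeries (fun n => u ^ n * A n w)%C). apply Cis_CSeries. eexists.
  eapply Cis_ext; [|apply H]. intros; cbv beta; ring.
Qed.

Lemma e2 u w : Cmod u < 1 -> Cmod w < 1 -> Cis (fun n => A n w * RtoC (INR n) * u ^ pred n)%C (Eu u w).
Proof. intros Hu Hw. apply (PD_cv (fun n => A n w) _ u (fun n => Abd n w Hw) Hu). Qed.

Lemma e2c u w : Cmod u < 1 -> Cmod w < 1 -> Cis (fun n => RtoC (INR n) * u ^ n * A n w)%C (u * Eu u w).
Proof. intros Hu Hw. eapply Cis_ext; [|apply (Cis_scal u), e2; auto]. intros n. cbv beta.
  rewrite <- (upred u n). ring. Qed.

Lemma e3 u w : Cmod u < 1 -> Cmod w < 1 -> Cis (fun n => u ^ n * A' n w)%C (Ev u w).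
Proof. intros Hu Hw. eapply Cis_ext; [|apply (PS_cv (fun n => A' n w) _ u (fun n => A'bd n w Hw) Hu)].
  intros; cbv beta; ring. Qed.

Lemma f1 u w : Cmod u < 1 -> Cmod w < 1 -> Cis (fun n => u ^ n * Phi n w)%C (Ft u w).
Proof. intros Hu Hw. eapply Cis_ext; [|apply (PS_cv (fun n => Phi n w) _ u (fun n => Phibd n w Hw) Hu)].
  intros; cbv beta; ring. Qed.

Lemma f2 u w : Cmod u < 1 -> Cmod w < 1 -> Cis (fun n => Phi n w * RtoC (INR n) * u ^ pred n)%C (Fu u w).
Proof. intros Hu Hw. apply (PD_cv (fun n => Phi n w) _ u (fun n => Phibd n w Hw) Hu). Qed.

Lemma f2c u w : Cmod u < 1 -> Cmod w < 1 -> Cis (fun n => RtoC (INR n) * u ^ n * Phi n w)%C (u * Fu u w).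
Proof. intros Hu Hw. eapply Cis_ext; [|apply (Cis_scal u), f2; auto]. intros n. cbv beta.
  rewrite <- (upred u n). ring. Qed.

Lemma f3 u w : Cmod u < 1 -> Cmod w < 1 -> Cis (fun n => u ^ n * Phi' n w)%C (Fv u w).
Proof. intros Hu Hw. eapply Cis_ext; [|apply (PS_cv (fun n => Phi' n w) _ u (fun n => Phi'bd n w Hw) Hu)].
  intros; cbv beta; ring. Qed.

Lemma hser u w : Cmod u < 1 -> Cmod w < 1 -> Cis (fun n => RtoC (INR n) * u ^ n * A (pred n) w)%C (u * E u w + u * (u * Eu u w))%C.
Proof.
  intros Hu Hw.
  replace (u * E u w + u * (u * Eu u w))%C with ((u * E u w + u * (u * Eu u w)) + RtoC (INR 0) * u ^ O * A (pred 0) w)%C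
    by (change (INR 0) with 0; simpl; ring).
  apply Cis_shift. eapply Cis_ext; [|apply Cis_plus; [apply (Cis_scal u), e1 | apply (Cis_scal u), e2c]; auto].
  intros n. cbv beta. rewrite S_INR, RtoC_plus. simpl pred. rewrite Cpow_S. ring.
Qed.

Lemma Star u w : Cmod u < 1 -> Cmod w < 1 ->
  ((RtoC (1 + rho) + s) * (u * Eu u w + w * Ev u w))%C =
  (RtoC rho * RtoC (1 - q) * (u * Fu u w + w * Fv u w) + w * / (RtoC 1 - u) + w * E u w + w * w * Ev u w
    + (u * E u w + u * (u * Eu u w)))%C.
Proof.
  intros Hu Hw. eapply Cis_eq_terms.
  - apply (Cis_scal (RtoC (1 + rho) + s)), Cis_plus; [apply e2c | apply (Cis_scal w), e3]; auto.
  - apply Cis_plus; [apply Cis_plus; [apply Cis_plus; [apply Cis_plus|]|]|].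
    + apply (Cis_scal (RtoC rho * RtoC (1 - q))), Cis_plus; [apply f2c | apply (Cis_scal w), f3]; auto.
    + apply (Cis_scal w), Cis_geom; auto.
    + apply (Cis_scal w), e1; auto.
    + apply (Cis_scal (w * w)), e3; auto.
    + apply hser; auto.
  - intros n. cbv beta. pose proof (In_id rho q s Hrho Hq0 Hq1 Hs n w Hw) as K.
    transitivity (u ^ n * ((RtoC (1 + rho) + s) * (RtoC (INR n) * A n w + w * A' n w)))%C. ring.
    rewrite K. ring.
Qed.

Lemma R1 u w : Cmod u < 1 -> Cmod w < 1 -> E u w = (G w + (u - qC) * Ft u w)%C.
Proof.
  intros Hu Hw. apply (Cis_unique _ _ _ (e1 u w Hu Hw)).
  pose proof (f1 u w Hu Hw) as H1. pose proof (Cis_unshift _ _ H1) as H2.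
  replace (G w + (u - qC) * Ft u w)%C with ((u * Ft u w - qC * (Ft u w - u ^ O * Phi O w)) + u ^ O * A O w)%C
    by (rewrite (G_eq rho q s Hrho Hq0 Hq1 Hs w Hw); simpl; ring).
  apply Cis_shift. eapply Cis_ext; [|apply Cis_minus; [apply (Cis_scal u), H1 | apply (Cis_scal qC), H2]].
  intros j. cbv beta. rewrite (Phi_rec rho q s Hrho Hq0 Hq1 Hs j w Hw). rewrite !Cpow_S. ring.
Qed.

Lemma R2 u w : Cmod u < 1 -> Cmod w < 1 -> Eu u w = (Ft u w + (u - qC) * Fu u w)%C.
Proof.
  intros Hu Hw. pose proof (Cis_unshift _ _ (e2 u w Hu Hw)) as H0.
  pose proof (Cis_unshift _ _ (f2 u w Hu Hw)) as H2.
  replace (Eu u w) with ((Eu u w - A O w * RtoC (INR 0) * u ^ pred 0) + A O w * RtoC (INR 0) * u ^ pred 0)%C by ring.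
  replace (Ft u w + (u - qC) * Fu u w)%C with (((Ft u w + u * Fu u w) - qC * (Fu u w - Phi O w * RtoC (INR 0) * u ^ pred 0)) + A O w * RtoC (INR 0) * u ^ pred 0)%C
    by (change (INR 0) with 0; simpl; ring).
  f_equal. apply (Cis_unique _ _ _ H0).
  eapply Cis_ext; [|apply Cis_minus; [apply Cis_plus; [apply f1|apply f2c]|apply (Cis_scal qC), H2]]; auto.
  intros j. cbv beta. rewrite (Phi_rec rho q s Hrho Hq0 Hq1 Hs j w Hw). simpl pred. rewrite S_INR, RtoC_plus. ring.
Qed.

Lemma R3 u w : Cmod u < 1 -> Cmod w < 1 -> Ev u w = (G' w + (u - qC) * Fv u w)%C.
Proof.
  intros Hu Hw. apply (Cis_unique _ _ _ (e3 u w Hu Hw)).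
  pose proof (f3 u w Hu Hw) as H1. pose proof (Cis_unshift _ _ H1) as H2.
  replace (G' w + (u - qC) * Fv u w)%C with ((u * Fv u w - qC * (Fv u w - u ^ O * Phi' O w)) + u ^ O * A' O w)%C
    by (rewrite (G'_eq rho q s Hrho Hq0 Hq1 Hs w Hw); simpl; ring).
  apply Cis_shift. eapply Cis_ext; [|apply Cis_minus; [apply (Cis_scal u), H1 | apply (Cis_scal qC), H2]].
  intros j. cbv beta. rewrite (Phi'_rec rho q s Hrho Hq0 Hq1 Hs j w Hw). rewrite !Cpow_S. ring.
Qed.

End GF3.

Section GF4.
Variables (rho q : R) (s : C).
Hypothesis Hrho : 0 < rho.
Hypothesis Hq0 : 0 < q.
Hypothesis Hq1 : q < 1.
Hypothesis Hs : 0 <= Re s.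

Notation qC := (RtoC q).
Notation cA := (cA rho q s).
Notation A := (A rho q s).
Notation A' := (A' rho q s).
Notation Phi := (Phi rho q s).
Notation Phi' := (Phi' rho q s).
Notation G := (G rho q s).
Notation G' := (G' rho q s).
Notation E := (Egen rho q s).
Notation Ft := (Ft rho q s).
Notation Fu := (Fu rho q s).
Notation Fv := (Fv rho q s).

Lemma A_bound v : Cmod v < 1 -> exists dl, 0 < dl /\ exists K0, 0 <= K0 /\
  forall n y, Cmod (y - v) < dl -> Cmod y < 1 /\
    Cmod (A n y - A n v - (y - v) * A' n v) <= K0 * (Cmod (y - v) * Cmod (y - v)).
Proof.
  intros Hv. destruct (PS_deriv v Hv) as [dl [Hdl [K0 [HK0 H]]]].
  exists dl. split; auto. exists K0. split; auto. intros n y Hy.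
  destruct (H (cA n) 1 (cA_bd rho q s Hrho Hq0 Hq1 Hs n) y Hy) as [Hy1 Hb]. split; auto.
  rewrite !(A_eq rho q s Hrho Hq0 Hq1 Hs) by auto. unfold A', Submission.A'. lra.
Qed.

Lemma Phi_bound v : Cmod v < 1 -> exists dl, 0 < dl /\ exists K, 0 <= K /\
  forall j y, Cmod (y - v) < dl -> Cmod y < 1 /\
    Cmod (Phi j y - Phi j v - (y - v) * Phi' j v) <= K * (Cmod (y - v) * Cmod (y - v)).
Proof.
  intros Hv. destruct (A_bound v Hv) as [dl [Hdl [K0 [HK0 H]]]].
  exists dl. split; auto. exists (K0 / (1 - q)). split. apply Rdiv_le_0_compat; lra.
  intros j y Hy. split. apply (H O y Hy).
  apply (SF (fun c y => qC ^ c * A (j + S c) y)%C (fun c => qC ^ c * A' (j + S c) v)%C (fun c => K0 * q ^ c) (Phi j) v dl); auto.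
  - intros z Hz. apply (Phi_is rho q s Hrho Hq0 Hq1 Hs j z). apply (H O z Hz).
  - apply (Phi'_is rho q s Hrho Hq0 Hq1 Hs j v Hv).
  - apply geom_is. lra.
  - intros z c Hz. replace (qC ^ c * A (j + S c) z - qC ^ c * A (j + S c) v - (z - v) * (qC ^ c * A' (j + S c) v))%C
      with (qC ^ c * (A (j + S c) z - A (j + S c) v - (z - v) * A' (j + S c) v))%C by ring.
    rewrite Cmod_mult, (qpow_mod q Hq0). destruct (H (j + S c)%nat z Hz) as [_ Hb].
    pose proof (pow_le q c ltac:(lra)). 
    replace (K0 * q ^ c * (Cmod (z - v) * Cmod (z - v))) with (q ^ c * (K0 * (Cmod (z - v) * Cmod (z - v)))) by ring.
    apply Rmult_le_compat_l; auto.
Qed.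

Lemma G_deriv v : Cmod v < 1 -> @is_derive C_AbsRing C_NormedModule (fun w => E qC w) v (G' v).
Proof.
  intros Hv. destruct (A_bound v Hv) as [dl [Hdl [K0 [HK0 H]]]].
  apply (deriv_bound _ _ _ dl (K0 / (1 - q))); auto. apply Rdiv_le_0_compat; lra.
  intros y Hy. change (E qC y) with (G y). change (E qC v) with (G v).
  apply (SF (fun n y => qC ^ n * A n y)%C (fun n => qC ^ n * A' n v)%C (fun n => K0 * q ^ n) G v dl); auto.
  - intros z Hz. apply (G_is rho q s Hrho Hq0 Hq1 Hs z). apply (H O z Hz).
  - apply (G'_is rho q s Hrho Hq0 Hq1 Hs v Hv).
  - apply geom_is. lra.
  - intros z c Hz. replace (qC ^ c * A c z - qC ^ c * A c v - (z - v) * (qC ^ c * A' c v))%C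
      with (qC ^ c * (A c z - A c v - (z - v) * A' c v))%C by ring.
    rewrite Cmod_mult, (qpow_mod q Hq0). destruct (H c z Hz) as [_ Hb].
    pose proof (pow_le q c ltac:(lra)).
    replace (K0 * q ^ c * (Cmod (z - v) * Cmod (z - v))) with (q ^ c * (K0 * (Cmod (z - v) * Cmod (z - v)))) by ring.
    apply Rmult_le_compat_l; auto.
Qed.

Lemma E_deriv_q w : Cmod w < 1 -> @is_derive C_AbsRing C_NormedModule (fun t => E t w) qC (Ft qC w).
Proof.
  intros Hw. assert (Hq : Cmod qC < 1) by (rewrite Cmod_R, Rabs_pos_eq; lra).
  destruct (PS_deriv qC Hq) as [dl [Hdl [K1 [HK1 H]]]].
  set (MP := MA w / (1 - q)).
  assert (HMP : 0 <= MP). { unfold MP, MA. apply Rdiv_le_0_compat; [|lra]. apply Rdiv_le_0_compat; lra. }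
  apply (deriv_bound _ _ _ dl (Cmod (Fu qC w) + MP * K1 * dl)); auto.
  pose proof (Cmod_ge_0 (Fu qC w)). assert (0 <= MP * K1) by (apply Rmult_le_pos; auto). assert (0 <= MP * K1 * dl) by (apply Rmult_le_pos; lra). lra.
  intros y Hy.
  destruct (H (fun j => Phi j w) MP (fun j => Phibd rho q s Hrho Hq0 Hq1 Hs j w Hw) y Hy) as [Hy1 Hb].
  rewrite (R1 rho q s Hrho Hq0 Hq1 Hs y w Hy1 Hw). change (E qC w) with (G w).
  replace (G w + (y - qC) * Ft y w - G w - (y - qC) * Ft qC w)%C with ((y - qC) * (Ft y w - Ft qC w))%C by ring.
  rewrite Cmod_mult.
  assert (Hd : Cmod (Ft y w - Ft qC w) <= Cmod (y - qC) * Cmod (Fu qC w) + MP * K1 * (Cmod (y - qC) * Cmod (y - qC))).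
  { replace (Ft y w - Ft qC w)%C with ((Ft y w - Ft qC w - (y - qC) * Fu qC w) + (y - qC) * Fu qC w)%C by ring.
    eapply Rle_trans. apply Cmod_triangle. rewrite Cmod_mult. unfold Ft, Fu, Submission.Ft, Submission.Fu. lra. }
  pose proof (Cmod_ge_0 (y - qC)). pose proof (Cmod_ge_0 (Fu qC w)).
  assert (MP * K1 * (Cmod (y - qC) * Cmod (y - qC)) <= MP * K1 * dl * Cmod (y - qC)).
  { assert (0 <= MP * K1) by nra. replace (MP * K1 * dl * Cmod (y - qC)) with (MP * K1 * (dl * Cmod (y - qC))) by ring.
    apply Rmult_le_compat_l; auto. apply Rmult_le_compat_r; lra. }
  assert (Cmod (y - qC) * Cmod (Ft y w - Ft qC w) <= Cmod (y - qC) * ((Cmod (Fu qC w) + MP * K1 * dl) * Cmod (y - qC))).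
  { apply Rmult_le_compat_l; auto. nra. }
  nra.
Qed.

Lemma Fgen_eq x w : Cmod x < 1 -> Cmod w < 1 -> Fgen rho q s x w = Ft x w.
Proof.
  intros Hx Hw. unfold Fgen. destruct (excluded_middle_informative (x = qC)) as [Hxq|Hxq].
  - subst x. unfold Cderive. pose proof (E_deriv_q w Hw) as HE.
    destruct (excluded_middle_informative _) as [Hex|Hn].
    + destruct (constructive_indefinite_description _ Hex) as [l Hl]. simpl. apply (deriv_unique _ _ _ _ Hl HE).
    + exfalso. apply Hn. exists (Ft qC w). exact HE.
  - rewrite (R1 rho q s Hrho Hq0 Hq1 Hs x w Hx Hw). change (E qC w) with (G w).
    field. intros E'. apply Hxq. replace x with ((x - qC) + qC)%C by ring. rewrite E'. ring.
Qed.

Lemma Fu_deriv u v : Cmod u < 1 -> Cmod v < 1 -> @is_derive C_AbsRing C_NormedModule (fun x => Fgen rho q s x v) u (Fu u v).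
Proof.
  intros Hu Hv. destruct (PS_deriv u Hu) as [dl [Hdl [K1 [HK1 H]]]].
  set (MP := MA v / (1 - q)).
  assert (HMP : 0 <= MP). { unfold MP, MA. apply Rdiv_le_0_compat; [|lra]. apply Rdiv_le_0_compat; lra. }
  apply (deriv_bound _ _ _ dl (MP * K1)); auto. nra.
  intros y Hy.
  destruct (H (fun j => Phi j v) MP (fun j => Phibd rho q s Hrho Hq0 Hq1 Hs j v Hv) y Hy) as [Hy1 Hb].
  rewrite !Fgen_eq by auto. exact Hb.
Qed.

Lemma Fv_deriv u v : Cmod u < 1 -> Cmod v < 1 -> @is_derive C_AbsRing C_NormedModule (fun y => Fgen rho q s u y) v (Fv u v).
Proof.
  intros Hu Hv. destruct (Phi_bound v Hv) as [dl [Hdl [K [HK H]]]].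
  pose proof (Cmod_ge_0 u).
  apply (deriv_bound _ _ _ dl (K / (1 - Cmod u))); auto. apply Rdiv_le_0_compat; lra.
  intros y Hy. destruct (H O y Hy) as [Hy1 _].
  rewrite !Fgen_eq by auto.
  apply (SF (fun j y => Phi j y * u ^ j)%C (fun j => Phi' j v * u ^ j)%C (fun j => K * Cmod u ^ j) (fun y => Ft u y) v dl); auto.
  - intros z Hz. apply (PS_cv (fun j => Phi j z) _ u (fun j => Phibd rho q s Hrho Hq0 Hq1 Hs j z (proj1 (H O z Hz))) Hu).
  - apply (PS_cv (fun j => Phi' j v) _ u (fun j => Phi'bd rho q s Hrho Hq0 Hq1 Hs j v Hv) Hu).
  - apply geom_is. lra.
  - intros z j Hz. replace (Phi j z * u ^ j - Phi j v * u ^ j - (z - v) * (Phi' j v * u ^ j))%C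
      with (u ^ j * (Phi j z - Phi j v - (z - v) * Phi' j v))%C by ring.
    rewrite Cmod_mult, Cmod_pow. destruct (H j z Hz) as [_ Hb].
    pose proof (pow_le (Cmod u) j H0).
    replace (K * Cmod u ^ j * (Cmod (z - v) * Cmod (z - v))) with (Cmod u ^ j * (K * (Cmod (z - v) * Cmod (z - v)))) by ring.
    apply Rmult_le_compat_l; auto.
Qed.

End GF4.

Theorem mainTheorem4 (rho q : R) (s u v : C)
  (Hrho : 0 < rho) (Hq0 : 0 < q) (Hq1 : q < 1) (Hstab : rho + q < 1)
  (Hs : 0 <= Re s) (Hu : Cmod u < 1) (Hv : Cmod v < 1) :
  exists Fu Fv Ev : C,
    @is_derive C_AbsRing C_NormedModule (fun w => Fgen rho q s w v) u Fu /\
    @is_derive C_AbsRing C_NormedModule (fun w => Fgen rho q s u w) v Fv /\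
    @is_derive C_AbsRing C_NormedModule (fun w => Egen rho q s (RtoC q) w) v Ev /\
    (u * Ppoly rho q s u * Fu
     + v * (RtoC (rho * (1 - q)) - (s + RtoC 1 + RtoC rho - v) * (u - RtoC q)) * Fv
     + (u * (u - s - RtoC 1 - RtoC rho) + (u - RtoC q) * (u + v)) * Fgen rho q s u v
     + (v / (RtoC 1 - u) + (u + v) * Egen rho q s (RtoC q) v
        - v * (s + RtoC 1 + RtoC rho - v) * Ev))%C = RtoC 0.
Proof.
  exists (Fu rho q s u v), (Fv rho q s u v), (G' rho q s v).
  split. apply Fu_deriv; auto. split. apply Fv_deriv; auto. split. apply G_deriv; auto.
  rewrite (Fgen_eq rho q s Hrho Hq0 Hq1 Hs u v Hu Hv).
  change (Egen rho q s (RtoC q) v) with (G rho q s v).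
  pose proof (Star rho q s Hrho Hq0 Hq1 Hs u v Hu Hv) as St.
  rewrite (R1 rho q s Hrho Hq0 Hq1 Hs u v Hu Hv), (R2 rho q s Hrho Hq0 Hq1 Hs u v Hu Hv),
    (R3 rho q s Hrho Hq0 Hq1 Hs u v Hu Hv) in St.
  unfold Ppoly. rewrite RtoC_mult, RtoC_minus. rewrite RtoC_plus, RtoC_minus in St.
  unfold Cdiv. match type of St with (?X = ?Y) => transitivity (- (X - Y))%C; [ring | rewrite St; ring] end.
Qed.
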